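(* Let $c_1>0$, $b_1=\frac{\sqrt{1+4c_1}-1}{2}$ and $b_4=\frac{1+\sqrt{1+4c_1}}{2}$ (so $b_1<\sqrt{c_1}<b_4$). Put $$F_1(\alpha)=\int_{\alpha}^{\sqrt{c_1}}\frac{(c_1-\rho^2)^{2m-1}}{\{\rho^{2m}-(c_1-\rho^2)^{2m}\}^{\frac{2m-1}{2m}}}\,d\rho\ \ (b_1\le\alpha\le\sqrt{c_1}),\qquad F_2(\alpha)=\int_{\sqrt{c_1}}^{\alpha}\frac{(\rho^2-c_1)^{2m-1}}{\{\rho^{2m}-(\rho^2-c_1)^{2m}\}^{\frac{2m-1}{2m}}}\,d\rho\ \ (\sqrt{c_1}\le\alpha\le b_4),$$ which are finite, and let $d_1=F_1(b_1)>0$, $d_3=F_2(b_4)>0$. In the $(\alpha,z)$ half-plane let $\Gamma$ be the curve obtained by traversing consecutively $G_1=\{(\alpha,-F_1(\alpha)):b_1\le\alpha\le\sqrt{c_1}\}$ with $\alpha$ increasing, $G_2=\{(\alpha,-F_2(\alpha)):\sqrt{c_1}\le\alpha\le b_4\}$ with $\alpha$ increasing, $G_3=\{(\alpha,F_2(\alpha)-2d_3):\sqrt{c_1}\le\alpha\le b_4\}$ with $\alpha$ decreasing, and $G_4=\{(\alpha,F_1(\alpha)-2d_3):b_1\le\alpha\le\sqrt{c_1}\}$ with $\alpha$ decreasing; $\Gamma$ runs from $(b_1,-d_1)$ to $(b_1,d_1-2d_3)$. Let $\Gamma^*$ be the curve obtained by concatenating the translates $\Gamma+k(0,2d_1-2d_3)$,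 $k\in\mathbb{Z}$, in increasing order of $k$. Then $\Gamma^*$ admits a regular $C^2$ parametrization $t\mapsto(\alpha^*(t),\beta^*(t))$, $t\in\mathbb{R}$, traversing it in this order, and the rotational surface $$f^*(t,v)=(\alpha^*(t)\cos v,\ \alpha^*(t)\sin v,\ \beta^*(t)),\qquad (t,v)\in\mathbb{R}\times[0,2\pi],$$ has a Birkhoff–Gauss map that is $C^1$ on the whole domain (with orientation: $\nabla\Phi(\eta)$ is a positive multiple of $f^*_t\times f^*_v$) and has constant Minkowski mean curvature $1$.
   Context: Fix an integer $m\ge 2$. Let $\Phi(x_1,x_2,x_3)=(x_1^2+x_2^2)^m+x_3^{2m}$ and let $\|\cdot\|$ be the norm on $\mathbb{R}^3$ whose unit sphere is $S=\{x\in\mathbb{R}^3:\Phi(x)=1\}$ (a smooth, strictly convex surface). For a surface given by a parametrization $f(s,v)$, its Birkhoff–Gauss map $\eta$ is the map into $S$ defined by requiring $\eta\in S$ and $\nabla\Phi(\eta)=\mu\, f_s\times f_v$ for some function $\mu>0$, where $\times$ is the standard cross product (so the tangent plane of $S$ at $\eta(p)$ is parallel to $T_pM$, and $d\eta_p$ is an endomorphism of $T_pM$). Where $\eta$ is $C^1$, the Minkowski mean curvature is $H=\tfrac12\operatorname{trace}(d\eta_p)$. *)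

(* Defs.v *)
From Stdlib Require Import Reals ZArith.
From Coquelicot Require Import Coquelicot.
Open Scope R_scope.

Definition Phi (m : nat) (x1 x2 x3 : R) : R :=
  (x1 ^ 2 + x2 ^ 2) ^ m + x3 ^ (2 * m).

Definition gradPhi1 m x1 x2 x3 := Derive (fun s => Phi m s x2 x3) x1.
Definition gradPhi2 m x1 x2 x3 := Derive (fun s => Phi m x1 s x3) x2.
Definition gradPhi3 m x1 x2 x3 := Derive (fun s => Phi m x1 x2 s) x3.

Definition b1 (c1 : R) : R := (sqrt (1 + 4 * c1) - 1) / 2.
Definition b4 (c1 : R) : R := (1 + sqrt (1 + 4 * c1)) / 2.

Definition integrand1 (m : nat) (c1 rho : R) : R :=
  (c1 - rho ^ 2) ^ (2 * m - 1) /
  Rpower (rho ^ (2 * m) - (c1 - rho ^ 2) ^ (2 * m)) (INR (2 * m - 1) / INR (2 * m)).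

Definition integrand2 (m : nat) (c1 rho : R) : R :=
  (rho ^ 2 - c1) ^ (2 * m - 1) /
  Rpower (rho ^ (2 * m) - (rho ^ 2 - c1) ^ (2 * m)) (INR (2 * m - 1) / INR (2 * m)).

(* F1(alpha) = int_alpha^{sqrt c1} integrand1; at alpha = b1 the integrand is
   singular, so the (improper) integral is the limit from the right. *)
Definition F1 (m : nat) (c1 alpha : R) : R :=
  if Req_EM_T alpha (b1 c1)
  then RInt_gen (integrand1 m c1) (at_right (b1 c1)) (at_point (sqrt c1))
  else RInt (integrand1 m c1) alpha (sqrt c1).

(* F2(alpha) = int_{sqrt c1}^alpha integrand2; improper at alpha = b4. *)
Definition F2 (m : nat) (c1 alpha : R) : R :=
  if Req_EM_T alpha (b4 c1)
  then RInt_gen (integrand2 m c1) (at_point (sqrt c1)) (at_left (b4 c1))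
  else RInt (integrand2 m c1) (sqrt c1) alpha.

Definition dval1 m c1 := F1 m c1 (b1 c1).
Definition dval3 m c1 := F2 m c1 (b4 c1).

(* ---------- reference parametrization of Gamma^* ----------
   For s in [4k+j, 4k+j+1) (j = 0,1,2,3) the point runs linearly in alpha
   through G_{j+1} (in the prescribed direction), translated by k(0, 2d1-2d3). *)
Definition floorR (x : R) : R := IZR (Int_part x).

Definition Gamma_ref (m : nat) (c1 s : R) : R * R :=
  let p := sqrt c1 in
  let k := floorR (s / 4) in
  let r := s - 4 * k in
  let sh := k * (2 * dval1 m c1 - 2 * dval3 m c1) in
  if Rlt_dec r 1 then
    let a := b1 c1 + r * (p - b1 c1) in (a, - F1 m c1 a + sh)
  else if Rlt_dec r 2 then
    let a := p + (r - 1) * (b4 c1 - p) in (a, - F2 m c1 a + sh)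
  else if Rlt_dec r 3 then
    let a := b4 c1 - (r - 2) * (b4 c1 - p) in (a, F2 m c1 a - 2 * dval3 m c1 + sh)
  else
    let a := p - (r - 3) * (p - b1 c1) in (a, F1 m c1 a - 2 * dval3 m c1 + sh).

Definition C2_fun (f : R -> R) : Prop :=
  (forall t, ex_derive f t) /\
  (forall t, ex_derive (Derive f) t) /\
  (forall t, continuous (Derive (Derive f)) t).

Definition pd_t (g : R -> R -> R) (t v : R) : R := Derive (fun s => g s v) t.
Definition pd_v (g : R -> R -> R) (t v : R) : R := Derive (fun s => g t s) v.

Definition C1_fun2 (g : R -> R -> R) : Prop :=
  (forall t v, ex_derive (fun s => g s v) t /\ ex_derive (fun s => g t s) v) /\
  (forall p : R * R,
     continuous (fun q : R * R => g (fst q) (snd q)) p /\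
     continuous (fun q : R * R => pd_t g (fst q) (snd q)) p /\
     continuous (fun q : R * R => pd_v g (fst q) (snd q)) p).

Definition fs1 (al : R -> R) (t v : R) : R := al t * cos v.
Definition fs2 (al : R -> R) (t v : R) : R := al t * sin v.
Definition fs3 (be : R -> R) (t v : R) : R := be t.

Definition is_BG_map_at (m : nat) (g1 g2 g3 e1 e2 e3 : R -> R -> R) (t v : R) : Prop :=
  let x1 := pd_t g1 t v in let x2 := pd_t g2 t v in let x3 := pd_t g3 t v in
  let y1 := pd_v g1 t v in let y2 := pd_v g2 t v in let y3 := pd_v g3 t v in
  let n1 := x2 * y3 - x3 * y2 in
  let n2 := x3 * y1 - x1 * y3 in
  let n3 := x1 * y2 - x2 * y1 in
  let h1 := e1 t v in let h2 := e2 t v in let h3 := e3 t v in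
  Phi m h1 h2 h3 = 1 /\
  exists mu : R, 0 < mu /\
    gradPhi1 m h1 h2 h3 = mu * n1 /\
    gradPhi2 m h1 h2 h3 = mu * n2 /\
    gradPhi3 m h1 h2 h3 = mu * n3.

(* Minkowski mean curvature H = (1/2) trace(d eta) equals h at (t,v):
   the matrix (a_ij) of d eta in the basis (g_t, g_v) of the tangent plane,
   d eta(g_t) = eta_t = a11 g_t + a21 g_v, d eta(g_v) = eta_v = a12 g_t + a22 g_v,
   has (a11 + a22)/2 = h. *)
Definition mink_mean_curv_is (g1 g2 g3 e1 e2 e3 : R -> R -> R) (t v h : R) : Prop :=
  exists a11 a12 a21 a22 : R,
    pd_t e1 t v = a11 * pd_t g1 t v + a21 * pd_v g1 t v /\
    pd_t e2 t v = a11 * pd_t g2 t v + a21 * pd_v g2 t v /\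
    pd_t e3 t v = a11 * pd_t g3 t v + a21 * pd_v g3 t v /\
    pd_v e1 t v = a12 * pd_t g1 t v + a22 * pd_v g1 t v /\
    pd_v e2 t v = a12 * pd_t g2 t v + a22 * pd_v g2 t v /\
    pd_v e3 t v = a12 * pd_t g3 t v + a22 * pd_v g3 t v /\
    (a11 + a22) / 2 = h.

(* Main.v *)
Require Import Defs.
From Stdlib Require Import Reals ZArith.
From Coquelicot Require Import Coquelicot.
From Stdlib Require Import Lra Lia Psatz.
Open Scope R_scope.

Definition C2e (f : R -> R) := exists f1 f2 : R -> R,
  forall x, is_derive f x (f1 x) /\ is_derive f1 x (f2 x) /\ continuous f2 x.

Lemma is_derive_cont (f : R -> R) (x l : R) : is_derive f x l -> continuous f x.
Proof. intros H. apply (@ex_derive_continuous R_AbsRing R_NormedModule). exists l; exact H. Qed.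

Lemma isd_plus (f g : R -> R) x a b : is_derive f x a -> is_derive g x b ->
  is_derive (fun y => f y + g y) x (a + b).
Proof. intros; exact (is_derive_plus f g x a b H H0). Qed.
Lemma isd_opp (f : R -> R) x a : is_derive f x a -> is_derive (fun y => - f y) x (- a).
Proof. intros; exact (is_derive_opp f x a H). Qed.
Lemma isd_mult (f g : R -> R) x a b : is_derive f x a -> is_derive g x b ->
  is_derive (fun y => f y * g y) x (a * g x + f x * b).
Proof. intros; exact (is_derive_mult f g x a b H H0 Rmult_comm). Qed.
Lemma isd_comp (f g : R -> R) x a b : is_derive g x b -> is_derive f (g x) a ->
  is_derive (fun y => f (g y)) x (a * b).
Proof. intros. rewrite Rmult_comm. exact (is_derive_comp f g x a b H0 H). Qed.
Lemma isd_const c x : is_derive (fun _ : R => c) x 0.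
Proof. auto_derive; auto. Qed.
Lemma isd_id x : is_derive (fun y : R => y) x 1.
Proof. auto_derive; auto. Qed.
Lemma cont_plus (f g : R -> R) x : continuous f x -> continuous g x -> continuous (fun y => f y + g y) x.
Proof. intros; exact (continuous_plus f g x H H0). Qed.
Lemma cont_mult (f g : R -> R) x : continuous f x -> continuous g x -> continuous (fun y => f y * g y) x.
Proof. intros; exact (continuous_mult f g x H H0). Qed.
Lemma cont_opp (f : R -> R) x : continuous f x -> continuous (fun y => - f y) x.
Proof. intros; exact (continuous_opp f x H). Qed.
Lemma cont_const (c x : R) : continuous (fun _ : R => c) x.
Proof. apply continuous_const. Qed.
Lemma cont_comp (f g : R -> R) x : continuous g x -> continuous f (g x) -> continuous (fun y => f (g y)) x.
Proof. intros; exact (continuous_comp g f x H H0). Qed.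

Lemma C2e_C2_fun f : C2e f -> C2_fun f.
Proof.
  intros [f1 [f2 H]].
  assert (E1 : forall x, Derive f x = f1 x) by (intros x; apply is_derive_unique, H).
  assert (E2 : forall x, Derive (Derive f) x = f2 x).
  { intros x. rewrite (Derive_ext _ f1 x E1). apply is_derive_unique, H. }
  split; [|split].
  - intros t; exists (f1 t); apply H.
  - intros t. apply (ex_derive_ext f1). intros; symmetry; apply E1. exists (f2 t); apply H.
  - intros t. apply (continuous_ext f2). intros; symmetry; apply E2. apply H.
Qed.

Lemma C2e_cst c : C2e (fun _ => c).
Proof.
  exists (fun _ => 0), (fun _ => 0). intros x; split; [|split].
  apply isd_const. apply isd_const. apply cont_const.
Qed.

Lemma C2e_id : C2e (fun x => x).
Proof.
  exists (fun _ => 1), (fun _ => 0). intros x; split; [|split].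
  apply isd_id. apply isd_const. apply cont_const.
Qed.

Lemma C2e_plus f g : C2e f -> C2e g -> C2e (fun x => f x + g x).
Proof.
  intros [f1 [f2 Hf]] [g1 [g2 Hg]].
  exists (fun x => f1 x + g1 x), (fun x => f2 x + g2 x). intros x.
  destruct (Hf x) as [a [b c]]; destruct (Hg x) as [a' [b' c']].
  split; [|split].
  apply isd_plus; auto. apply isd_plus; auto.
  apply cont_plus; auto.
Qed.

Lemma C2e_opp f : C2e f -> C2e (fun x => - f x).
Proof.
  intros [f1 [f2 Hf]].
  exists (fun x => - f1 x), (fun x => - f2 x). intros x.
  destruct (Hf x) as [a [b c]].
  split; [|split].
  apply isd_opp; auto. apply isd_opp; auto.
  apply cont_opp; auto.
Qed.

Lemma C2e_mult f g : C2e f -> C2e g -> C2e (fun x => f x * g x).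
Proof.
  intros [f1 [f2 Hf]] [g1 [g2 Hg]].
  exists (fun x => f1 x * g x + f x * g1 x),
    (fun x => (f2 x * g x + f1 x * g1 x) + (f1 x * g1 x + f x * g2 x)). intros x.
  destruct (Hf x) as [a [b c]]; destruct (Hg x) as [a' [b' c']].
  split; [|split].
  - apply isd_mult; auto.
  - apply isd_plus; apply isd_mult; auto.
  - apply cont_plus; apply cont_plus; apply cont_mult; auto;
    eapply is_derive_cont; eauto.
Qed.

Lemma C2e_comp (g g1 g2 : R -> R) (D : R -> Prop) f :
  C2e f -> (forall x, D (f x)) ->
  (forall y, D y -> is_derive g y (g1 y) /\ is_derive g1 y (g2 y) /\ continuous g2 y) ->
  C2e (fun x => g (f x)).
Proof.
  intros [f1 [f2 Hf]] HD Hg.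
  exists (fun x => g1 (f x) * f1 x),
    (fun x => (g2 (f x) * f1 x) * f1 x + g1 (f x) * f2 x). intros x.
  destruct (Hf x) as [a [b c]]; destruct (Hg (f x) (HD x)) as [a' [b' c']].
  split; [|split].
  - apply isd_comp; auto.
  - apply (isd_mult (fun y => g1 (f y)) f1); auto. apply (isd_comp g1 f); auto.
  - assert (cf : continuous f x) by (eapply is_derive_cont; eauto).
    assert (cf1 : continuous f1 x) by (eapply is_derive_cont; eauto).
    assert (cg1 : continuous g1 (f x)) by (eapply is_derive_cont; eauto).
    apply cont_plus; apply cont_mult; auto.
    apply cont_mult; auto. apply cont_comp; auto.
    apply cont_comp; auto.
Qed.

Lemma C2e_pow f n : C2e f -> C2e (fun x => f x ^ n).
Proof.
  intros Hf; induction n.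
  - change (C2e (fun _ => 1)). apply C2e_cst.
  - change (C2e (fun x => f x * f x ^ n)). apply C2e_mult; auto.
Qed.

Lemma cont_of_ex (f : R -> R) x : ex_derive f x -> continuous f x.
Proof. intros. apply (@ex_derive_continuous R_AbsRing R_NormedModule); auto. Qed.

Lemma C2e_exp f : C2e f -> C2e (fun x => exp (f x)).
Proof.
  intros Hf. apply (C2e_comp exp exp exp (fun _ => True)); auto.
  intros y _. split; [|split]; try (auto_derive; auto; ring).
  apply cont_of_ex; auto_derive; auto.
Qed.

Lemma C2e_sin f : C2e f -> C2e (fun x => sin (f x)).
Proof.
  intros Hf. apply (C2e_comp sin cos (fun y => - sin y) (fun _ => True)); auto.
  intros y _. split; [|split]; try (auto_derive; auto; ring).
  apply cont_of_ex; auto_derive; auto.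
Qed.

Lemma C2e_cos f : C2e f -> C2e (fun x => cos (f x)).
Proof.
  intros Hf. apply (C2e_comp cos (fun y => - sin y) (fun y => - cos y) (fun _ => True)); auto.
  intros y _. split; [|split]; try (auto_derive; auto; ring).
  apply cont_of_ex; auto_derive; auto.
Qed.

Lemma C2e_ln f : C2e f -> (forall x, 0 < f x) -> C2e (fun x => ln (f x)).
Proof.
  intros Hf Hp. apply (C2e_comp ln (fun y => / y) (fun y => - / (y * y)) (fun y => 0 < y)); auto.
  intros y Hy. split; [|split].
  auto_derive; try lra; try (field; lra).
  auto_derive; try lra; try (field; lra).
  apply cont_of_ex; auto_derive; repeat split; try (apply Rgt_not_eq; repeat apply Rmult_lt_0_compat; nra); try nra.
Qed.

Lemma C2e_inv f : C2e f -> (forall x, 0 < f x) -> C2e (fun x => / (f x)).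
Proof.
  intros Hf Hp. apply (C2e_comp Rinv (fun y => - / (y * y)) (fun y => 2 / (y * y * y)) (fun y => 0 < y)); auto.
  intros y Hy. split; [|split].
  auto_derive; try lra; try (field; lra).
  auto_derive; try nra; try (field; lra).
  apply cont_of_ex; auto_derive; repeat split; try (apply Rgt_not_eq; repeat apply Rmult_lt_0_compat; nra); try nra.
Qed.

Lemma C2e_sqrt f : C2e f -> (forall x, 0 < f x) -> C2e (fun x => sqrt (f x)).
Proof.
  intros Hf Hp. apply (C2e_comp sqrt (fun y => / (2 * sqrt y)) (fun y => - / (4 * y * sqrt y)) (fun y => 0 < y)); auto.
  intros y Hy. assert (0 < sqrt y) by (apply sqrt_lt_R0; auto).
  split; [|split].
  auto_derive; try lra; try (field; lra).
  auto_derive; try nra.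
  replace (4 * y * sqrt y) with (4 * (sqrt y * sqrt y) * sqrt y) by (rewrite sqrt_sqrt; lra). field; lra.
  apply cont_of_ex; auto_derive; repeat split; try (apply Rgt_not_eq; repeat apply Rmult_lt_0_compat; nra); try nra.
Qed.


Definition Qf (m : nat) (t : R) : R := cos t ^ (2*m) + sin t ^ (2*m).
Definition Nf (m : nat) (t : R) : R := exp (ln (Qf m t) / INR (2*m)).
Definition Rf (m : nat) (t : R) : R := - cos t / Nf m t.
Definition Wf (m : nat) (t : R) : R := sin t / Nf m t.
Definition Sf (m : nat) (c1 t : R) : R := sqrt (Rf m t ^ 2 + 4 * c1).
Definition alf (m : nat) (c1 t : R) : R := (Rf m t + Sf m c1 t) / 2.
Definition bpf (m : nat) (c1 t : R) : R :=
  cos t ^ (2*m-1) * alf m c1 t / (Qf m t * Nf m t * Sf m c1 t).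

Lemma pow_2m_pos x m : (1 <= m)%nat -> 0 <= x ^ (2*m).
Proof. intros. rewrite pow_mult. apply pow_le. nra. Qed.

Lemma Qf_pos m t : (1 <= m)%nat -> 0 < Qf m t.
Proof.
  intros Hm. unfold Qf. rewrite !pow_mult.
  assert (H := sin2_cos2 t). unfold Rsqr in H.
  destruct (Req_dec (cos t) 0) as [E|E].
  - rewrite E. replace (sin t ^ 2) with 1 by (rewrite E in H; simpl; lra).
    rewrite pow1. assert (0 <= (0^2)^m) by (apply pow_le; nra). lra.
  - assert (0 < (cos t ^ 2) ^ m) by (apply pow_lt; simpl; nra).
    assert (0 <= (sin t ^ 2) ^ m) by (apply pow_le; nra). lra.
Qed.

Lemma Nf_pos m t : 0 < Nf m t.
Proof. apply exp_pos. Qed.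

Lemma exp_pow x n : exp x ^ n = exp (INR n * x).
Proof.
  induction n. simpl. rewrite Rmult_0_l, exp_0; auto.
  rewrite S_INR. simpl. rewrite IHn. rewrite <- exp_plus. f_equal; ring.
Qed.

Lemma Nf_pow m t : (1 <= m)%nat -> Nf m t ^ (2*m) = Qf m t.
Proof.
  intros Hm. unfold Nf. rewrite exp_pow.
  assert (0 < INR (2*m)) by (apply lt_0_INR; lia).
  replace (INR (2 * m) * (ln (Qf m t) / INR (2 * m))) with (ln (Qf m t)) by (field; lra).
  apply exp_ln, Qf_pos; auto.
Qed.

Lemma C2e_Qf m : C2e (Qf m).
Proof. unfold Qf. apply C2e_plus; apply C2e_pow; [apply C2e_cos|apply C2e_sin]; apply C2e_id. Qed.

Lemma C2e_Nf m : (1 <= m)%nat -> C2e (Nf m).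
Proof.
  intros Hm. unfold Nf. apply C2e_exp. unfold Rdiv. apply C2e_mult; [|apply C2e_cst].
  apply C2e_ln. apply C2e_Qf. intros; apply Qf_pos; auto.
Qed.

Lemma C2e_Rf m : (1 <= m)%nat -> C2e (Rf m).
Proof.
  intros Hm. unfold Rf, Rdiv. apply C2e_mult. apply C2e_opp, C2e_cos, C2e_id.
  apply C2e_inv. apply C2e_Nf; auto. intros; apply Nf_pos.
Qed.

Lemma C2e_Wf m : (1 <= m)%nat -> C2e (Wf m).
Proof.
  intros Hm. unfold Wf, Rdiv. apply C2e_mult. apply C2e_sin, C2e_id.
  apply C2e_inv. apply C2e_Nf; auto. intros; apply Nf_pos.
Qed.

Lemma Sf_pos m c1 t : 0 < c1 -> 0 < Sf m c1 t.
Proof. intros. unfold Sf. apply sqrt_lt_R0. nra. Qed.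

Lemma C2e_Sf m c1 : (1 <= m)%nat -> 0 < c1 -> C2e (Sf m c1).
Proof.
  intros Hm Hc. unfold Sf. apply C2e_sqrt. apply C2e_plus. apply C2e_pow, C2e_Rf; auto.
  apply C2e_cst. intros; nra.
Qed.

Lemma C2e_alf m c1 : (1 <= m)%nat -> 0 < c1 -> C2e (alf m c1).
Proof.
  intros Hm Hc. unfold alf, Rdiv. apply C2e_mult; [|apply C2e_cst].
  apply C2e_plus. apply C2e_Rf; auto. apply C2e_Sf; auto.
Qed.

Lemma alf_pos m c1 t : 0 < c1 -> 0 < alf m c1 t.
Proof.
  intros Hc. unfold alf, Sf.
  assert (Rf m t < sqrt (Rf m t ^ 2 + 4 * c1)).
  { destruct (Rlt_or_le (Rf m t) 0). assert (0 < sqrt (Rf m t ^ 2 + 4 * c1)) by (apply sqrt_lt_R0; nra). lra.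
    apply Rsqr_incrst_0. unfold Rsqr. rewrite sqrt_sqrt; nra. auto. apply sqrt_pos. }
  assert (- Rf m t < sqrt (Rf m t ^ 2 + 4 * c1)).
  { destruct (Rlt_or_le (- Rf m t) 0). assert (0 < sqrt (Rf m t ^ 2 + 4 * c1)) by (apply sqrt_lt_R0; nra). lra.
    apply Rsqr_incrst_0. unfold Rsqr. rewrite sqrt_sqrt; nra. auto. apply sqrt_pos. }
  lra.
Qed.

Lemma C2e_bpf m c1 : (1 <= m)%nat -> 0 < c1 -> C2e (bpf m c1).
Proof.
  intros Hm Hc. unfold bpf, Rdiv. apply C2e_mult. apply C2e_mult.
  apply C2e_pow, C2e_cos, C2e_id. apply C2e_alf; auto.
  apply C2e_inv. apply C2e_mult. apply C2e_mult. apply C2e_Qf. apply C2e_Nf; auto. apply C2e_Sf; auto.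
  intros. pose proof (Qf_pos m x Hm). pose proof (Nf_pos m x). pose proof (Sf_pos m c1 x Hc).
  repeat apply Rmult_lt_0_compat; auto.
Qed.


Lemma neq0 x : 0 < x -> x <> 0.
Proof. intros; apply Rgt_not_eq; lra. Qed.

Lemma gen_R_deriv k t : 0 < cos t ^ (S k) + sin t ^ (S k) ->
  is_derive (fun t => - cos t / exp (ln (cos t ^ (S k) + sin t ^ (S k)) / INR (S k))) t
   (sin t ^ k * (sin t * sin t + cos t * cos t) /
     ((cos t ^ (S k) + sin t ^ (S k)) * exp (ln (cos t ^ (S k) + sin t ^ (S k)) / INR (S k)))).
Proof.
  intros HQ. auto_derive.
  - split; auto. split; auto. apply neq0, exp_pos.
  - simpl pred. set (E := exp _).
    assert (0 < E) by apply exp_pos.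
    assert (0 < INR (S k)) by (apply lt_0_INR; lia).
    revert HQ. simpl. intros HQ. field. repeat split; apply neq0; auto.
Qed.

Lemma gen_W_deriv k t : 0 < cos t ^ (S k) + sin t ^ (S k) ->
  is_derive (fun t => sin t / exp (ln (cos t ^ (S k) + sin t ^ (S k)) / INR (S k))) t
   (cos t ^ k * (sin t * sin t + cos t * cos t) /
     ((cos t ^ (S k) + sin t ^ (S k)) * exp (ln (cos t ^ (S k) + sin t ^ (S k)) / INR (S k)))).
Proof.
  intros HQ. auto_derive.
  - split; auto. split; auto. apply neq0, exp_pos.
  - simpl pred. set (E := exp _).
    assert (0 < E) by apply exp_pos.
    assert (0 < INR (S k)) by (apply lt_0_INR; lia).
    revert HQ. simpl. intros HQ. field. repeat split; apply neq0; auto.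
Qed.

Lemma Rf_deriv m t : (1 <= m)%nat ->
  is_derive (Rf m) t (sin t ^ (2*m-1) / (Qf m t * Nf m t)).
Proof.
  intros Hm. assert (HQ := Qf_pos m t Hm).
  unfold Rf, Nf, Qf in *. set (k := (2*m-1)%nat) in *. assert (Ek : (2*m = S k)%nat) by (unfold k; lia). rewrite Ek in *.
  replace (sin t ^ k) with (sin t ^ k * (sin t * sin t + cos t * cos t)).
  apply gen_R_deriv; auto.
  pose proof (sin2_cos2 t) as H. unfold Rsqr in H. rewrite H; ring.
Qed.

Lemma Wf_deriv m t : (1 <= m)%nat ->
  is_derive (Wf m) t (cos t ^ (2*m-1) / (Qf m t * Nf m t)).
Proof.
  intros Hm. assert (HQ := Qf_pos m t Hm).
  unfold Wf, Nf, Qf in *. set (k := (2*m-1)%nat) in *. assert (Ek : (2*m = S k)%nat) by (unfold k; lia). rewrite Ek in *.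
  replace (cos t ^ k) with (cos t ^ k * (sin t * sin t + cos t * cos t)).
  apply gen_W_deriv; auto.
  pose proof (sin2_cos2 t) as H. unfold Rsqr in H. rewrite H; ring.
Qed.

Lemma alf_deriv m c1 t : (1 <= m)%nat -> 0 < c1 ->
  is_derive (alf m c1) t (sin t ^ (2*m-1) / (Qf m t * Nf m t) * alf m c1 t / Sf m c1 t).
Proof.
  intros Hm Hc. pose proof (Rf_deriv m t Hm) as HR.
  assert (HS := Sf_pos m c1 t Hc).
  unfold alf, Sf in *. set (d := sin t ^ (2*m-1) / (Qf m t * Nf m t)) in *.
  auto_derive.
  - repeat split; try (exists d; exact HR). nra.
  - replace (Derive (fun x => Rf m x) t) with d by (symmetry; apply is_derive_unique; exact HR).
    replace (Rf m t * (Rf m t * 1)) with (Rf m t ^ 2) by ring. field. apply neq0; auto.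
Qed.

Definition bef (m : nat) (c1 t : R) : R := RInt (bpf m c1) (PI/2) t.

Lemma bpf_cont m c1 t : (1 <= m)%nat -> 0 < c1 -> continuous (bpf m c1) t.
Proof.
  intros Hm Hc. destruct (C2e_bpf m c1 Hm Hc) as [f1 [f2 H]].
  eapply is_derive_cont. apply H.
Qed.

Lemma bef_deriv m c1 t : (1 <= m)%nat -> 0 < c1 -> is_derive (bef m c1) t (bpf m c1 t).
Proof.
  intros Hm Hc. apply (is_derive_RInt (bpf m c1) (bef m c1) (PI/2)).
  - apply filter_forall. intros y. unfold bef. apply (RInt_correct (V:=R_CompleteNormedModule)).
    apply ex_RInt_continuous. intros; apply bpf_cont; auto.
  - apply bpf_cont; auto.
Qed.

Lemma C2e_bef m c1 : (1 <= m)%nat -> 0 < c1 -> C2e (bef m c1).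
Proof.
  intros Hm Hc. destruct (C2e_bpf m c1 Hm Hc) as [f1 [f2 H]].
  exists (bpf m c1), f1. intros x. split; [|split].
  apply bef_deriv; auto. apply H. eapply is_derive_cont. apply H.
Qed.


Lemma Qf_cs m a b : cos a = cos b -> sin a ^ 2 = sin b ^ 2 -> Qf m a = Qf m b.
Proof. intros H1 H2. unfold Qf. rewrite !pow_mult, H1, H2. reflexivity. Qed.

Lemma all_cs m c1 a b : cos a = cos b -> sin a ^ 2 = sin b ^ 2 ->
  Nf m a = Nf m b /\ Rf m a = Rf m b /\ Sf m c1 a = Sf m c1 b /\ alf m c1 a = alf m c1 b /\
  bpf m c1 a = bpf m c1 b.
Proof.
  intros H1 H2. pose proof (Qf_cs m a b H1 H2) as HQ.
  assert (HN : Nf m a = Nf m b) by (unfold Nf; rewrite HQ; auto).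
  assert (HR : Rf m a = Rf m b) by (unfold Rf; rewrite HN, H1; auto).
  assert (HS : Sf m c1 a = Sf m c1 b) by (unfold Sf; rewrite HR; auto).
  assert (HA : alf m c1 a = alf m c1 b) by (unfold alf; rewrite HR, HS; auto).
  repeat split; auto. unfold bpf. rewrite H1, HA, HQ, HN, HS; auto.
Qed.

Lemma cs_per t : cos (t + 2*PI) = cos t /\ sin (t + 2*PI) ^ 2 = sin t ^ 2.
Proof. rewrite cos_plus, sin_plus, cos_2PI, sin_2PI. split; ring. Qed.

Lemma cs_sym t : cos (2*PI - t) = cos t /\ sin (2*PI - t) ^ 2 = sin t ^ 2.
Proof. rewrite cos_minus, sin_minus, cos_2PI, sin_2PI. split; ring. Qed.

Lemma Nf_Q1 m t : Qf m t = 1 -> Nf m t = 1.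
Proof. intros H. unfold Nf. rewrite H, ln_1. unfold Rdiv. rewrite Rmult_0_l. apply exp_0. Qed.

Lemma pow0_2m m : (1 <= m)%nat -> 0 ^ (2*m) = 0.
Proof. intros. apply pow_i. lia. Qed.

Lemma Qf_0 m : (1 <= m)%nat -> Qf m 0 = 1.
Proof. intros. unfold Qf. rewrite cos_0, sin_0, pow1, pow0_2m; auto; ring. Qed.
Lemma Qf_PI2 m : (1 <= m)%nat -> Qf m (PI/2) = 1.
Proof. intros. unfold Qf. rewrite cos_PI2, sin_PI2, pow1, pow0_2m; auto; ring. Qed.
Lemma Qf_PI m : (1 <= m)%nat -> Qf m PI = 1.
Proof. intros. unfold Qf. rewrite cos_PI, sin_PI, pow_1_even, pow0_2m; auto; ring. Qed.

Lemma Rf_0 m : (1 <= m)%nat -> Rf m 0 = -1.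
Proof. intros. unfold Rf. rewrite Nf_Q1, cos_0. field. apply Qf_0; auto. Qed.
Lemma Rf_PI2 m : (1 <= m)%nat -> Rf m (PI/2) = 0.
Proof. intros. unfold Rf. rewrite Nf_Q1, cos_PI2. field. apply Qf_PI2; auto. Qed.
Lemma Rf_PI m : (1 <= m)%nat -> Rf m PI = 1.
Proof. intros. unfold Rf. rewrite Nf_Q1, cos_PI. field. apply Qf_PI; auto. Qed.

Lemma alf_0 m c1 : (1 <= m)%nat -> alf m c1 0 = b1 c1.
Proof. intros. unfold alf, Sf, b1. rewrite Rf_0; auto. replace ((-1)^2 + 4*c1) with (1 + 4*c1) by ring. field. Qed.
Lemma alf_PI m c1 : (1 <= m)%nat -> alf m c1 PI = b4 c1.
Proof. intros. unfold alf, Sf, b4. rewrite Rf_PI; auto. replace (1^2 + 4*c1) with (1 + 4*c1) by ring. field. Qed.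
Lemma alf_PI2 m c1 : (1 <= m)%nat -> 0 < c1 -> alf m c1 (PI/2) = sqrt c1.
Proof.
  intros. unfold alf, Sf. rewrite Rf_PI2; auto.
  replace (0 ^ 2 + 4 * c1) with (2 * 2 * c1) by ring.
  rewrite sqrt_mult; try lra. replace (2*2) with (Rsqr 2) by (unfold Rsqr; ring).
  rewrite sqrt_Rsqr; lra.
Qed.

Lemma b1_lt c1 : 0 < c1 -> b1 c1 < sqrt c1.
Proof.
  intros Hc. unfold b1. assert (0 < sqrt c1) by (apply sqrt_lt_R0; auto).
  assert (sqrt (1 + 4 * c1) < 2 * sqrt c1 + 1).
  { apply Rsqr_incrst_0; try lra. unfold Rsqr. rewrite sqrt_sqrt; try lra.
    ring_simplify. rewrite pow2_sqrt; lra. apply sqrt_pos. }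
  lra.
Qed.

Lemma b4_gt c1 : 0 < c1 -> sqrt c1 < b4 c1.
Proof.
  intros Hc. unfold b4. assert (0 < sqrt c1) by (apply sqrt_lt_R0; auto).
  assert (2 * sqrt c1 - 1 < sqrt (1 + 4 * c1)).
  { destruct (Rlt_or_le (2 * sqrt c1 - 1) 0). assert (0 <= sqrt (1 + 4*c1)) by apply sqrt_pos. lra.
    apply Rsqr_incrst_0; try lra. unfold Rsqr. rewrite sqrt_sqrt; try lra.
    ring_simplify. rewrite pow2_sqrt; lra. apply sqrt_pos. }
  lra.
Qed.

Lemma alf_quad m c1 t : 0 < c1 -> alf m c1 t ^ 2 - Rf m t * alf m c1 t = c1.
Proof.
  intros Hc. unfold alf, Sf. set (r := Rf m t).
  assert (H : sqrt (r ^ 2 + 4 * c1) * sqrt (r ^ 2 + 4 * c1) = r^2 + 4*c1) by (apply sqrt_sqrt; nra).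
  nra.
Qed.

Lemma pow_div x y k : y <> 0 -> (x / y) ^ k = x ^ k / y ^ k.
Proof. intros. unfold Rdiv. rewrite Rpow_mult_distr, pow_inv; auto. Qed.

Lemma pow_opp_even x m : (- x) ^ (2*m) = x ^ (2*m).
Proof. rewrite !pow_mult. f_equal. ring. Qed.

Lemma RW_pow m t : (1 <= m)%nat -> Rf m t ^ (2*m) + Wf m t ^ (2*m) = 1.
Proof.
  intros Hm. unfold Rf, Wf. pose proof (Nf_pos m t). pose proof (Qf_pos m t Hm).
  rewrite !pow_div; try (apply neq0; auto). rewrite pow_opp_even, Nf_pow; auto.
  unfold Qf in *. field. apply neq0; auto.
Qed.


Lemma Wf_pos m t : 0 < sin t -> 0 < Wf m t.
Proof. intros. unfold Wf. apply Rdiv_lt_0_compat; auto. apply Nf_pos. Qed.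

Lemma integ_den m c1 t : (1 <= m)%nat -> 0 < c1 -> 0 < sin t ->
  alf m c1 t ^ (2*m) - (c1 - alf m c1 t ^ 2) ^ (2*m) = (alf m c1 t * Wf m t) ^ (2*m).
Proof.
  intros Hm Hc Hs. pose proof (alf_quad m c1 t Hc) as Hq.
  replace (c1 - alf m c1 t ^ 2) with (- (Rf m t * alf m c1 t)) by lra.
  rewrite pow_opp_even, !Rpow_mult_distr.
  pose proof (RW_pow m t Hm). replace (Wf m t ^ (2*m)) with (1 - Rf m t ^ (2*m)) by lra. ring.
Qed.

Lemma Rpower_2m z m : (1 <= m)%nat -> 0 < z ->
  Rpower (z ^ (2*m)) (INR (2*m-1) / INR (2*m)) = z ^ (2*m-1).
Proof.
  intros Hm Hz. unfold Rpower at 1. rewrite ln_pow; auto.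
  assert (0 < INR (2*m)) by (apply lt_0_INR; lia).
  replace (INR (2 * m - 1) / INR (2 * m) * (INR (2 * m) * ln z)) with (INR (2*m-1) * ln z) by (field; lra).
  change (exp (INR (2 * m - 1) * ln z)) with (Rpower z (INR (2*m-1))).
  apply Rpower_pow; auto.
Qed.

Lemma pow_opp_odd x m : (1 <= m)%nat -> (- x) ^ (2*m-1) = - x ^ (2*m-1).
Proof.
  intros Hm. replace (2*m-1)%nat with (S (2*(m-1))) by lia. rewrite <- !tech_pow_Rmult.
  rewrite pow_opp_even. ring.
Qed.

Lemma integ1_id m c1 t : (1 <= m)%nat -> 0 < c1 -> 0 < sin t ->
  sin t ^ (2*m-1) / (Qf m t * Nf m t) * alf m c1 t / Sf m c1 t *
  integrand1 m c1 (alf m c1 t) = bpf m c1 t.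
Proof.
  intros Hm Hc Hs. unfold integrand1. rewrite integ_den; auto.
  assert (Ha := alf_pos m c1 t Hc). assert (HW := Wf_pos m t Hs).
  rewrite Rpower_2m; auto; [|apply Rmult_lt_0_compat; auto].
  pose proof (alf_quad m c1 t Hc) as Hq. pose proof (Nf_pos m t) as HN.
  pose proof (Qf_pos m t Hm) as HQ. pose proof (Sf_pos m c1 t Hc) as HS.
  assert (E1 : Rf m t * alf m c1 t = - (cos t * alf m c1 t / Nf m t)) by (unfold Rf; field; apply neq0; auto).
  replace (c1 - alf m c1 t ^ 2) with (cos t * alf m c1 t / Nf m t) by lra.
  unfold Wf, bpf. rewrite !pow_div, !Rpow_mult_distr; try (apply neq0; auto).
  assert (0 < sin t ^ (2*m-1)) by (apply pow_lt; auto).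
  assert (0 < alf m c1 t ^ (2*m-1)) by (apply pow_lt; auto).
  assert (0 < Nf m t ^ (2*m-1)) by (apply pow_lt; auto).
  rewrite (pow_div (sin t)); [|apply neq0; auto].
  set (sk := sin t ^ (2*m-1)) in *. set (ak := alf m c1 t ^ (2*m-1)) in *.
  set (nk := Nf m t ^ (2*m-1)) in *. set (ck := cos t ^ (2*m-1)) in *.
  field. repeat split; apply neq0; auto.
Qed.

Lemma integ2_id m c1 t : (1 <= m)%nat -> 0 < c1 -> 0 < sin t ->
  sin t ^ (2*m-1) / (Qf m t * Nf m t) * alf m c1 t / Sf m c1 t *
  integrand2 m c1 (alf m c1 t) = - bpf m c1 t.
Proof.
  intros Hm Hc Hs. unfold integrand2.
  replace (alf m c1 t ^ 2 - c1) with (- (c1 - alf m c1 t ^ 2)) by ring.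
  rewrite pow_opp_even, integ_den; auto.
  assert (Ha := alf_pos m c1 t Hc). assert (HW := Wf_pos m t Hs).
  rewrite Rpower_2m; auto; [|apply Rmult_lt_0_compat; auto].
  pose proof (alf_quad m c1 t Hc) as Hq. pose proof (Nf_pos m t) as HN.
  pose proof (Qf_pos m t Hm) as HQ. pose proof (Sf_pos m c1 t Hc) as HS.
  assert (E1 : Rf m t * alf m c1 t = - (cos t * alf m c1 t / Nf m t)) by (unfold Rf; field; apply neq0; auto).
  replace (- (c1 - alf m c1 t ^ 2)) with (- (cos t * alf m c1 t / Nf m t)) by lra.
  rewrite pow_opp_odd; auto.
  unfold Wf, bpf. rewrite !pow_div, !Rpow_mult_distr; try (apply neq0; auto).
  assert (0 < sin t ^ (2*m-1)) by (apply pow_lt; auto).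
  assert (0 < alf m c1 t ^ (2*m-1)) by (apply pow_lt; auto).
  assert (0 < Nf m t ^ (2*m-1)) by (apply pow_lt; auto).
  rewrite (pow_div (sin t)); [|apply neq0; auto].
  set (sk := sin t ^ (2*m-1)) in *. set (ak := alf m c1 t ^ (2*m-1)) in *.
  set (nk := Nf m t ^ (2*m-1)) in *. set (ck := cos t ^ (2*m-1)) in *.
  field. repeat split; apply neq0; auto.
Qed.


Lemma isd_val (f : R -> R) x a b : is_derive f x a -> a = b -> is_derive f x b.
Proof. intros H E; rewrite <- E; auto. Qed.

Lemma strict_incr (f df : R -> R) a b : (forall x, is_derive f x (df x)) ->
  (forall x, a < x < b -> 0 < df x) -> forall x y, a <= x -> x < y -> y <= b -> f x < f y.
Proof.
  intros Hd Hp x y H1 H2 H3.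
  destruct (MVT_cor2 f df x y H2) as [c [Hc1 Hc2]].
  intros; apply is_derive_Reals; auto.
  assert (0 < df c) by (apply Hp; lra). nra.
Qed.

Lemma strict_decr (f df : R -> R) a b : (forall x, is_derive f x (df x)) ->
  (forall x, a < x < b -> df x < 0) -> forall x y, a <= x -> x < y -> y <= b -> f y < f x.
Proof.
  intros Hd Hp x y H1 H2 H3.
  destruct (MVT_cor2 f df x y H2) as [c [Hc1 Hc2]].
  intros; apply is_derive_Reals; auto.
  assert (df c < 0) by (apply Hp; lra). nra.
Qed.

Lemma const_deriv0 (f : R -> R) : (forall x, is_derive f x 0) -> forall a b, f a = f b.
Proof.
  intros Hd a b. destruct (Rtotal_order a b) as [H|[H|H]]; [|subst; reflexivity|].
  - destruct (MVT_cor2 f (fun _ => 0) a b H) as [c [Hc1 Hc2]].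
    intros; apply is_derive_Reals; auto. lra.
  - destruct (MVT_cor2 f (fun _ => 0) b a H) as [c [Hc1 Hc2]].
    intros; apply is_derive_Reals; auto. lra.
Qed.

Definition ald m c1 t := sin t ^ (2*m-1) / (Qf m t * Nf m t) * alf m c1 t / Sf m c1 t.

Lemma ald_pos m c1 t : (1 <= m)%nat -> 0 < c1 -> 0 < sin t -> 0 < ald m c1 t.
Proof.
  intros. unfold ald. pose proof (Nf_pos m t). pose proof (Qf_pos m t H).
  pose proof (Sf_pos m c1 t H0). pose proof (alf_pos m c1 t H0).
  assert (0 < sin t ^ (2*m-1)) by (apply pow_lt; auto).
  set (a := alf m c1 t) in *; clearbody a. repeat (apply Rdiv_lt_0_compat || apply Rmult_lt_0_compat || apply Rinv_0_lt_compat); auto.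
Qed.

Lemma ald_neg m c1 t : (1 <= m)%nat -> 0 < c1 -> sin t < 0 -> ald m c1 t < 0.
Proof.
  intros. unfold ald. pose proof (Nf_pos m t). pose proof (Qf_pos m t H).
  pose proof (Sf_pos m c1 t H0). pose proof (alf_pos m c1 t H0).
  assert (0 < (- sin t) ^ (2*m-1)) by (apply pow_lt; lra).
  rewrite pow_opp_odd in H6; auto.
  set (s := sin t ^ (2*m-1)) in *. set (a := alf m c1 t) in *; clearbody a.
  clearbody s.
  assert (0 < (-s) / (Qf m t * Nf m t) * a / Sf m c1 t).
  repeat (apply Rdiv_lt_0_compat || apply Rmult_lt_0_compat || apply Rinv_0_lt_compat); auto; try lra.
  unfold Rdiv in *. nra.
Qed.

Lemma alf_der m c1 t : (1 <= m)%nat -> 0 < c1 -> is_derive (alf m c1) t (ald m c1 t).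
Proof. intros; apply alf_deriv; auto. Qed.

Lemma alf_incr m c1 x y : (1 <= m)%nat -> 0 < c1 -> 0 <= x -> x < y -> y <= PI -> alf m c1 x < alf m c1 y.
Proof.
  intros Hm Hc. apply (strict_incr _ (ald m c1) 0 PI). intros; apply alf_der; auto.
  intros z Hz. apply ald_pos; auto. apply sin_gt_0; lra.
Qed.

Lemma alf_decr m c1 x y : (1 <= m)%nat -> 0 < c1 -> PI <= x -> x < y -> y <= 2*PI -> alf m c1 y < alf m c1 x.
Proof.
  intros Hm Hc. apply (strict_decr _ (ald m c1) PI (2*PI)). intros; apply alf_der; auto.
  intros z Hz. apply ald_neg; auto. apply sin_lt_0; lra.
Qed.

Lemma alf_per m c1 t : alf m c1 (t + 2*PI) = alf m c1 t.
Proof. destruct (cs_per t) as [H1 H2]. apply (all_cs m c1 _ _ H1 H2). Qed.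
Lemma alf_sym m c1 t : alf m c1 (2*PI - t) = alf m c1 t.
Proof. destruct (cs_sym t) as [H1 H2]. apply (all_cs m c1 _ _ H1 H2). Qed.
Lemma bpf_per m c1 t : bpf m c1 (t + 2*PI) = bpf m c1 t.
Proof. destruct (cs_per t) as [H1 H2]. apply (all_cs m c1 _ _ H1 H2). Qed.
Lemma bpf_sym m c1 t : bpf m c1 (2*PI - t) = bpf m c1 t.
Proof. destruct (cs_sym t) as [H1 H2]. apply (all_cs m c1 _ _ H1 H2). Qed.

Lemma bef_per m c1 t : (1 <= m)%nat -> 0 < c1 ->
  bef m c1 (t + 2*PI) = bef m c1 t + (bef m c1 (2*PI) - bef m c1 0).
Proof.
  intros Hm Hc.
  assert (H : forall x, is_derive (fun x => bef m c1 (x + 2*PI) - bef m c1 x) x 0).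
  { intros x. apply (isd_val _ _ (bpf m c1 (x + 2*PI) * 1 + - bpf m c1 x)).
    2: rewrite bpf_per, Rmult_1_r; apply Rplus_opp_r.
    apply (isd_plus (fun x => bef m c1 (x + 2*PI)) (fun x => - bef m c1 x)).
    apply (isd_comp (bef m c1) (fun x => x + 2*PI)). auto_derive; auto; try ring. apply bef_deriv; auto.
    apply isd_opp, bef_deriv; auto. }
  pose proof (const_deriv0 _ H t 0) as E. simpl in E. rewrite Rplus_0_l in E. lra.
Qed.

Lemma bef_sym m c1 t : (1 <= m)%nat -> 0 < c1 ->
  bef m c1 (2*PI - t) = 2 * bef m c1 PI - bef m c1 t.
Proof.
  intros Hm Hc.
  assert (H : forall x, is_derive (fun x => bef m c1 (2*PI - x) + bef m c1 x) x 0).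
  { intros x. apply (isd_val _ _ (bpf m c1 (2*PI - x) * (-1) + bpf m c1 x)).
    2: rewrite bpf_sym; assert (Hy : forall y : R, y * (-1) + y = 0) by (intros; ring); apply Hy.
    apply (isd_plus (fun x => bef m c1 (2*PI - x)) (fun x => bef m c1 x)).
    apply (isd_comp (bef m c1) (fun x => 2*PI - x)). auto_derive; auto; try ring. apply bef_deriv; auto.
    apply bef_deriv; auto. }
  pose proof (const_deriv0 _ H t PI) as E. simpl in E.
  replace (2*PI - PI) with PI in E by ring. lra.
Qed.


Lemma ball_R (x e y : R) : Rabs (y - x) < e -> ball x e y.
Proof. intros H. exact H. Qed.

Lemma ball_R' (x e y : R) : ball x e y -> Rabs (y - x) < e.
Proof. intros H. exact H. Qed.

Lemma cont_eps (f : R -> R) x eps : continuous f x -> 0 < eps ->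
  exists d, 0 < d /\ forall y, Rabs (y - x) < d -> Rabs (f y - f x) < eps.
Proof.
  intros Hc He. apply continuity_pt_filterlim in Hc.
  destruct (Hc eps He) as [d [Hd H]]. exists d; split; auto.
  intros y Hy. destruct (Req_dec y x) as [E|E]. subst. rewrite Rminus_diag, Rabs_R0; auto.
  apply H. split. split. exact I. auto. exact Hy.
Qed.

Lemma pow_lt_l x y n : 0 <= x -> x < y -> x ^ (S n) < y ^ (S n).
Proof.
  intros H1 H2. induction n. simpl; lra.
  rewrite <- (tech_pow_Rmult x), <- (tech_pow_Rmult y).
  assert (0 <= x ^ (S n)) by (apply pow_le; auto). nra.
Qed.

Lemma b1_eq c1 : 0 < c1 -> b1 c1 ^ 2 + b1 c1 = c1.
Proof. intros. unfold b1. assert (H1 := sqrt_sqrt (1 + 4*c1)). assert (0 <= 1 + 4*c1) by lra. specialize (H1 H0). nra. Qed.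
Lemma b4_eq c1 : 0 < c1 -> b4 c1 ^ 2 - b4 c1 = c1.
Proof. intros. unfold b4. assert (H1 := sqrt_sqrt (1 + 4*c1)). assert (0 <= 1 + 4*c1) by lra. specialize (H1 H0). nra. Qed.
Lemma b1_pos c1 : 0 < c1 -> 0 < b1 c1.
Proof.
  intros. unfold b1. assert (1 < sqrt (1 + 4*c1)). rewrite <- sqrt_1 at 1. apply sqrt_lt_1; lra. lra.
Qed.

Lemma D_pos m c1 z : (1 <= m)%nat -> 0 < c1 -> b1 c1 < z < b4 c1 ->
  0 < z ^ (2*m) - (c1 - z ^ 2) ^ (2*m).
Proof.
  intros Hm Hc Hz. pose proof (b1_eq c1 Hc). pose proof (b4_eq c1 Hc). pose proof (b1_pos c1 Hc).
  assert (Hb : b4 c1 = b1 c1 + 1) by (unfold b4, b1; field).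
  assert (A1 : 0 < z ^ 2 + z - c1).
  { assert (0 < (z - b1 c1) * (z + b1 c1 + 1)) by (apply Rmult_lt_0_compat; lra). nra. }
  assert (A2 : z ^ 2 - z - c1 < 0).
  { assert (0 < (b4 c1 - z) * (z + b1 c1)) by (apply Rmult_lt_0_compat; lra). nra. }
  assert (A3 : (c1 - z ^ 2) ^ 2 < z ^ 2).
  { assert (0 < (z ^ 2 + z - c1) * (- (z ^ 2 - z - c1))) by (apply Rmult_lt_0_compat; lra). nra. }
  rewrite !pow_mult. replace m with (S (m-1)) by lia.
  assert (0 <= (c1 - z^2)^2) by apply pow2_ge_0.
  pose proof (pow_lt_l _ _ (m-1) H2 A3). lra.
Qed.

Lemma integrand1_cont m c1 z : (1 <= m)%nat -> 0 < c1 -> b1 c1 < z < b4 c1 ->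
  continuous (integrand1 m c1) z.
Proof.
  intros Hm Hc Hz. pose proof (D_pos m c1 z Hm Hc Hz).
  apply cont_of_ex. unfold integrand1, Rpower. auto_derive.
  repeat split; auto. apply neq0, exp_pos.
Qed.

Lemma integrand2_cont m c1 z : (1 <= m)%nat -> 0 < c1 -> b1 c1 < z < b4 c1 ->
  continuous (integrand2 m c1) z.
Proof.
  intros Hm Hc Hz. pose proof (D_pos m c1 z Hm Hc Hz).
  replace ((c1 - z^2)^(2*m)) with ((z^2 - c1)^(2*m)) in H by (rewrite <- pow_opp_even; f_equal; ring).
  apply cont_of_ex. unfold integrand2, Rpower. auto_derive.
  repeat split; auto. apply neq0, exp_pos.
Qed.

Lemma ald_cont m c1 x : (1 <= m)%nat -> 0 < c1 -> continuous (ald m c1) x.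
Proof.
  intros Hm Hc. destruct (C2e_alf m c1 Hm Hc) as [f1 [f2 H]].
  apply (continuous_ext f1).
  intros y. pose proof (is_derive_unique _ _ _ (proj1 (H y))) as E1.
  pose proof (is_derive_unique _ _ _ (alf_der m c1 y Hm Hc)). congruence.
  eapply is_derive_cont. apply H.
Qed.

Lemma alf_cont m c1 x : (1 <= m)%nat -> 0 < c1 -> continuous (alf m c1) x.
Proof. intros. eapply is_derive_cont. apply alf_der; auto. Qed.

Lemma alf_range m c1 x : (1 <= m)%nat -> 0 < c1 -> 0 < x < PI -> b1 c1 < alf m c1 x < b4 c1.
Proof.
  intros Hm Hc Hx. rewrite <- alf_0 with (m := m), <- alf_PI with (m := m); auto.
  split; apply alf_incr; auto; lra.
Qed.

Lemma ex_RInt_bpf m c1 a b : (1 <= m)%nat -> 0 < c1 -> ex_RInt (bpf m c1) a b.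
Proof. intros. apply (ex_RInt_continuous (V:=R_CompleteNormedModule)). intros; apply bpf_cont; auto. Qed.

Lemma F1_alf m c1 t : (1 <= m)%nat -> 0 < c1 -> 0 < t <= PI/2 -> F1 m c1 (alf m c1 t) = - bef m c1 t.
Proof.
  intros Hm Hc Ht. pose proof PI_RGT_0.
  unfold F1. destruct Req_EM_T as [E|E].
  { exfalso. pose proof (alf_incr m c1 0 t Hm Hc). rewrite alf_0 in H0; auto. lra. }
  replace (sqrt c1) with (alf m c1 (PI/2)) by (apply alf_PI2; auto).
  rewrite <- (RInt_comp (integrand1 m c1) (alf m c1) (ald m c1) t (PI/2)).
  - rewrite (RInt_ext _ (bpf m c1)).
    + unfold bef. rewrite <- opp_RInt_swap by (apply ex_RInt_bpf; auto). unfold opp; simpl. ring.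
    + intros x Hx. rewrite Rmin_left, Rmax_right in Hx by lra.
      unfold scal; simpl; unfold mult; simpl. unfold ald. apply integ1_id; auto. apply sin_gt_0; lra.
  - intros x Hx. rewrite Rmin_left, Rmax_right in Hx by lra.
    apply integrand1_cont; auto. apply alf_range; auto; lra.
  - intros x _. split. apply alf_der; auto. apply ald_cont; auto.
Qed.

Lemma F2_alf m c1 t : (1 <= m)%nat -> 0 < c1 -> PI/2 <= t < PI -> F2 m c1 (alf m c1 t) = - bef m c1 t.
Proof.
  intros Hm Hc Ht. pose proof PI_RGT_0.
  unfold F2. destruct Req_EM_T as [E|E].
  { exfalso. pose proof (alf_incr m c1 t PI Hm Hc). rewrite alf_PI in H0; auto. lra. }
  replace (sqrt c1) with (alf m c1 (PI/2)) by (apply alf_PI2; auto).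
  rewrite <- (RInt_comp (integrand2 m c1) (alf m c1) (ald m c1) (PI/2) t).
  - rewrite (RInt_ext _ (fun y => - (bpf m c1 y))).
    + pose proof (RInt_opp (V:=R_CompleteNormedModule) (bpf m c1) (PI/2) t (ex_RInt_bpf m c1 _ _ Hm Hc)) as HO.
      simpl in HO. unfold opp in HO; simpl in HO. rewrite HO. unfold bef. reflexivity.
    + intros x Hx. rewrite Rmin_left, Rmax_right in Hx by lra.
      unfold scal; simpl; unfold mult, opp; simpl. unfold ald. apply integ2_id; auto. apply sin_gt_0; lra.
  - intros x Hx. rewrite Rmin_left, Rmax_right in Hx by lra.
    apply integrand2_cont; auto. apply alf_range; auto; lra.
  - intros x _. split. apply alf_der; auto. apply ald_cont; auto.
Qed.


Lemma RInt1_alf m c1 t : (1 <= m)%nat -> 0 < c1 -> 0 < t <= PI/2 ->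
  RInt (integrand1 m c1) (alf m c1 t) (sqrt c1) = - bef m c1 t.
Proof.
  intros Hm Hc Ht. pose proof (F1_alf m c1 t Hm Hc Ht) as H. unfold F1 in H.
  destruct (Req_EM_T _ _) as [E|E]; auto.
  exfalso. pose proof (alf_incr m c1 0 t Hm Hc). rewrite alf_0 in H0; auto. lra.
Qed.

Lemma RInt2_alf m c1 t : (1 <= m)%nat -> 0 < c1 -> PI/2 <= t < PI ->
  RInt (integrand2 m c1) (sqrt c1) (alf m c1 t) = - bef m c1 t.
Proof.
  intros Hm Hc Ht. pose proof PI_RGT_0. pose proof (F2_alf m c1 t Hm Hc Ht) as H0. unfold F2 in H0.
  destruct (Req_EM_T _ _) as [E|E]; auto.
  exfalso. pose proof (alf_incr m c1 t PI Hm Hc). rewrite alf_PI in H1; auto. lra.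
Qed.

Lemma alf_continuity m c1 : (1 <= m)%nat -> 0 < c1 -> continuity (alf m c1).
Proof. intros Hm Hc x. apply continuity_pt_filterlim. apply alf_cont; auto. Qed.

Lemma bef_cont m c1 x : (1 <= m)%nat -> 0 < c1 -> continuous (bef m c1) x.
Proof. intros. eapply is_derive_cont. apply bef_deriv; auto. Qed.

Lemma isRIg1 m c1 : (1 <= m)%nat -> 0 < c1 ->
  is_RInt_gen (integrand1 m c1) (at_right (b1 c1)) (at_point (sqrt c1)) (- bef m c1 0).
Proof.
  intros Hm Hc P [eps HP]. unfold filtermapi.
  pose proof PI_RGT_0 as HPI.
  destruct (cont_eps (bef m c1) 0 eps (bef_cont m c1 0 Hm Hc) (cond_pos eps)) as [d [Hd Hcd]].
  set (t0 := Rmin d (PI/2) / 2).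
  assert (Ht0 : 0 < t0 < d /\ t0 < PI/2).
  { unfold t0. pose proof (Rmin_l d (PI/2)). pose proof (Rmin_r d (PI/2)).
    assert (0 < Rmin d (PI/2)) by (apply Rmin_glb_lt; lra). lra. }
  set (a0 := alf m c1 t0).
  assert (Ha0 : b1 c1 < a0).
  { unfold a0. rewrite <- (alf_0 m c1 Hm). apply alf_incr; auto; lra. }
  assert (Ha0' : a0 < sqrt c1).
  { unfold a0. rewrite <- (alf_PI2 m c1 Hm Hc). apply alf_incr; auto; lra. }
  apply (Filter_prod _ _ _ (fun x => b1 c1 < x < a0) (fun y => y = sqrt c1)).
  - unfold at_right, within. exists (mkposreal (a0 - b1 c1) ltac:(lra)).
    intros y Hy Hb. apply ball_R' in Hy. simpl in Hy. split; auto.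
    apply Rabs_def2 in Hy. lra.
  - reflexivity.
  - intros x y [Hx1 Hx2] Hy. subst y. simpl.
    destruct (IVT_gen (alf m c1) 0 t0 x (alf_continuity m c1 Hm Hc)) as [s [Hs1 Hs2]].
    { rewrite alf_0 by auto. fold a0. rewrite Rmin_left, Rmax_right; lra. }
    rewrite Rmin_left, Rmax_right in Hs1 by lra.
    assert (Hs0 : s <> 0). { intros E. subst s. rewrite alf_0 in Hs2; auto. lra. }
    exists (- bef m c1 s). split.
    + rewrite <- (RInt1_alf m c1 s) by (auto; lra). rewrite Hs2.
      apply (RInt_correct (V:=R_CompleteNormedModule)).
      apply (ex_RInt_continuous (V:=R_CompleteNormedModule)). intros z Hz.
      pose proof (b1_lt c1 Hc). pose proof (b4_gt c1 Hc).
      rewrite Rmin_left, Rmax_right in Hz by lra.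
      apply integrand1_cont; auto. lra.
    + apply HP. apply ball_R. specialize (Hcd s). rewrite Rminus_0_r in Hcd.
      replace (- bef m c1 s - - bef m c1 0) with (- (bef m c1 s - bef m c1 0)) by ring.
      rewrite Rabs_Ropp. apply Hcd. rewrite Rabs_right; lra.
Qed.

Lemma isRIg2 m c1 : (1 <= m)%nat -> 0 < c1 ->
  is_RInt_gen (integrand2 m c1) (at_point (sqrt c1)) (at_left (b4 c1)) (- bef m c1 PI).
Proof.
  intros Hm Hc P [eps HP]. unfold filtermapi.
  pose proof PI_RGT_0 as HPI.
  destruct (cont_eps (bef m c1) PI eps (bef_cont m c1 PI Hm Hc) (cond_pos eps)) as [d [Hd Hcd]].
  set (t0 := PI - Rmin d (PI/2) / 2).
  assert (Ht0 : PI - d < t0 < PI /\ PI/2 < t0).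
  { unfold t0. pose proof (Rmin_l d (PI/2)). pose proof (Rmin_r d (PI/2)).
    assert (0 < Rmin d (PI/2)) by (apply Rmin_glb_lt; lra). lra. }
  set (a0 := alf m c1 t0).
  assert (Ha0 : a0 < b4 c1).
  { unfold a0. rewrite <- (alf_PI m c1 Hm). apply alf_incr; auto; lra. }
  assert (Ha0' : sqrt c1 < a0).
  { unfold a0. rewrite <- (alf_PI2 m c1 Hm Hc). apply alf_incr; auto; lra. }
  apply (Filter_prod _ _ _ (fun y => y = sqrt c1) (fun x => a0 < x < b4 c1)).
  - reflexivity.
  - unfold at_left, within. exists (mkposreal (b4 c1 - a0) ltac:(lra)).
    intros y Hy Hb. apply ball_R' in Hy. simpl in Hy. split; auto.
    apply Rabs_def2 in Hy. lra.
  - intros y x Hy [Hx1 Hx2]. subst y. simpl.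
    destruct (IVT_gen (alf m c1) t0 PI x (alf_continuity m c1 Hm Hc)) as [s [Hs1 Hs2]].
    { rewrite alf_PI by auto. fold a0. rewrite Rmin_left, Rmax_right; lra. }
    rewrite Rmin_left, Rmax_right in Hs1 by lra.
    assert (Hs0 : s <> PI). { intros E. subst s. rewrite alf_PI in Hs2; auto. lra. }
    exists (- bef m c1 s). split.
    + rewrite <- (RInt2_alf m c1 s) by (auto; lra). rewrite Hs2.
      apply (RInt_correct (V:=R_CompleteNormedModule)).
      apply (ex_RInt_continuous (V:=R_CompleteNormedModule)). intros z Hz.
      pose proof (b1_lt c1 Hc). pose proof (b4_gt c1 Hc).
      rewrite Rmin_left, Rmax_right in Hz by lra.
      apply integrand2_cont; auto. lra.
    + apply HP. apply ball_R. specialize (Hcd s).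
      replace (- bef m c1 s - - bef m c1 PI) with (- (bef m c1 s - bef m c1 PI)) by ring.
      rewrite Rabs_Ropp. apply Hcd. rewrite Rabs_left; lra.
Qed.


Lemma dval1_eq m c1 : (1 <= m)%nat -> 0 < c1 -> dval1 m c1 = - bef m c1 0.
Proof.
  intros Hm Hc. unfold dval1, F1. destruct (Req_EM_T _ _) as [_|E]; [|congruence].
  apply (is_RInt_gen_unique (V:=R_CompleteNormedModule)). apply isRIg1; auto.
Qed.

Lemma dval3_eq m c1 : (1 <= m)%nat -> 0 < c1 -> dval3 m c1 = - bef m c1 PI.
Proof.
  intros Hm Hc. unfold dval3, F2. destruct (Req_EM_T _ _) as [_|E]; [|congruence].
  apply (is_RInt_gen_unique (V:=R_CompleteNormedModule)). apply isRIg2; auto.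
Qed.

Lemma bpf_pos m c1 t : (1 <= m)%nat -> 0 < c1 -> 0 < cos t -> 0 < bpf m c1 t.
Proof.
  intros Hm Hc H. unfold bpf. pose proof (Nf_pos m t). pose proof (Qf_pos m t Hm).
  pose proof (Sf_pos m c1 t Hc). pose proof (alf_pos m c1 t Hc).
  assert (0 < cos t ^ (2*m-1)) by (apply pow_lt; auto).
  set (a := alf m c1 t) in *; clearbody a.
  repeat (apply Rdiv_lt_0_compat || apply Rmult_lt_0_compat || apply Rinv_0_lt_compat); auto.
Qed.

Lemma bpf_neg m c1 t : (1 <= m)%nat -> 0 < c1 -> cos t < 0 -> bpf m c1 t < 0.
Proof.
  intros Hm Hc H. unfold bpf. pose proof (Nf_pos m t). pose proof (Qf_pos m t Hm).
  pose proof (Sf_pos m c1 t Hc). pose proof (alf_pos m c1 t Hc).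
  assert (0 < (- cos t) ^ (2*m-1)) by (apply pow_lt; lra).
  rewrite pow_opp_odd in H4; auto.
  set (a := alf m c1 t) in *; clearbody a. set (s := cos t ^ (2*m-1)) in *; clearbody s.
  assert (0 < (-s) * a / (Qf m t * Nf m t * Sf m c1 t)).
  repeat (apply Rdiv_lt_0_compat || apply Rmult_lt_0_compat || apply Rinv_0_lt_compat); auto; try lra.
  unfold Rdiv in *. nra.
Qed.

Lemma bef_PI2 m c1 : bef m c1 (PI/2) = 0.
Proof. unfold bef. apply (RInt_point (V:=R_CompleteNormedModule)). Qed.

Lemma bef_0_neg m c1 : (1 <= m)%nat -> 0 < c1 -> bef m c1 0 < 0.
Proof.
  intros Hm Hc. pose proof PI_RGT_0. rewrite <- (bef_PI2 m c1) at 2.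
  apply (strict_incr _ (bpf m c1) 0 (PI/2)); try lra.
  intros; apply bef_deriv; auto.
  intros x Hx. apply bpf_pos; auto. apply cos_gt_0; lra.
Qed.

Lemma bef_PI_neg m c1 : (1 <= m)%nat -> 0 < c1 -> bef m c1 PI < 0.
Proof.
  intros Hm Hc. pose proof PI_RGT_0. rewrite <- (bef_PI2 m c1).
  apply (strict_decr _ (bpf m c1) (PI/2) PI); try lra.
  intros; apply bef_deriv; auto.
  intros x Hx. apply bpf_neg; auto. apply cos_lt_0; lra.
Qed.

Lemma F1_all m c1 t : (1 <= m)%nat -> 0 < c1 -> 0 <= t <= PI/2 -> F1 m c1 (alf m c1 t) = - bef m c1 t.
Proof.
  intros Hm Hc Ht. destruct (Req_dec t 0) as [E|E].
  - subst t. rewrite alf_0; auto. fold (dval1 m c1). apply dval1_eq; auto.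
  - apply F1_alf; auto; lra.
Qed.

Lemma F2_all m c1 t : (1 <= m)%nat -> 0 < c1 -> PI/2 <= t <= PI -> F2 m c1 (alf m c1 t) = - bef m c1 t.
Proof.
  intros Hm Hc Ht. destruct (Req_dec t PI) as [E|E].
  - subst t. rewrite alf_PI; auto. fold (dval3 m c1). apply dval3_eq; auto.
  - apply F2_alf; auto; lra.
Qed.

Definition Dp m c1 := bef m c1 (2*PI) - bef m c1 0.

Lemma nat_shift m c1 t n : (1 <= m)%nat -> 0 < c1 ->
  alf m c1 (t + 2*PI*INR n) = alf m c1 t /\ bef m c1 (t + 2*PI*INR n) = bef m c1 t + INR n * Dp m c1.
Proof.
  intros Hm Hc. induction n.
  - simpl. rewrite Rmult_0_r, Rplus_0_r. split; auto; ring.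
  - rewrite S_INR. replace (t + 2*PI*(INR n + 1)) with ((t + 2*PI*INR n) + 2*PI) by ring.
    rewrite alf_per, bef_per; auto. destruct IHn as [H1 H2]. rewrite H1, H2. unfold Dp. split; auto. ring.
Qed.

Lemma Z_shift m c1 t k : (1 <= m)%nat -> 0 < c1 ->
  alf m c1 (t + 2*PI*IZR k) = alf m c1 t /\ bef m c1 (t + 2*PI*IZR k) = bef m c1 t + IZR k * Dp m c1.
Proof.
  intros Hm Hc. destruct (Z_le_gt_dec 0 k).
  - replace k with (Z.of_nat (Z.to_nat k)) by (apply Z2Nat.id; auto).
    rewrite <- INR_IZR_INZ. apply nat_shift; auto.
  - set (n := Z.to_nat (- k)).
    assert (Ek : k = (- Z.of_nat n)%Z) by (unfold n; rewrite Z2Nat.id; lia).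
    rewrite Ek, opp_IZR, <- INR_IZR_INZ.
    pose proof (nat_shift m c1 (t + 2*PI*(- INR n)) n Hm Hc) as [H1 H2].
    replace (t + 2*PI*(- INR n) + 2*PI*INR n) with t in H1, H2 by ring.
    split. auto. lra.
Qed.


Lemma Int_part_unique x z : IZR z <= x < IZR z + 1 -> Int_part x = z.
Proof.
  intros [H1 H2]. unfold Int_part.
  assert (E : (z + 1)%Z = up x).
  { apply tech_up; rewrite plus_IZR; simpl; lra. }
  lia.
Qed.

Lemma alf_3PI2 m c1 : (1 <= m)%nat -> 0 < c1 -> alf m c1 (3*PI/2) = sqrt c1.
Proof. intros. replace (3*PI/2) with (2*PI - PI/2) by field. rewrite alf_sym. apply alf_PI2; auto. Qed.

Lemma alf_2PI m c1 : (1 <= m)%nat -> alf m c1 (2*PI) = b1 c1.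
Proof. intros. replace (2*PI) with (0 + 2*PI) by ring. rewrite alf_per. apply alf_0; auto. Qed.

Definition kf t := Int_part (t / (2*PI)).
Definition uf t := t - 2*PI*IZR (kf t).

Lemma uf_range t : 0 <= uf t < 2*PI.
Proof.
  unfold uf, kf. pose proof PI_RGT_0. destruct (base_Int_part (t / (2*PI))) as [H1 H2].
  set (z := IZR (Int_part (t / (2*PI)))) in *.
  assert (t = (t / (2*PI)) * (2*PI)) by (field; lra).
  split; nra.
Qed.

Lemma t_decomp t : t = uf t + 2*PI*IZR (kf t).
Proof. unfold uf; ring. Qed.

Lemma kf_unique u k : 0 <= u < 2*PI -> kf (u + 2*PI*IZR k) = k.
Proof.
  intros Hu. unfold kf. pose proof PI_RGT_0. apply Int_part_unique.
  replace ((u + 2 * PI * IZR k) / (2 * PI)) with (IZR k + u / (2*PI)) by (field; lra).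
  assert (0 <= u / (2*PI) < 1).
  { split. apply Rmult_le_pos; [lra| left; apply Rinv_0_lt_compat; lra].
    apply (Rmult_lt_reg_r (2*PI)); try lra. unfold Rdiv. rewrite Rmult_assoc, Rinv_l; lra. }
  lra.
Qed.

Definition psi m c1 u :=
  let p := sqrt c1 in
  if Rlt_dec u (PI/2) then (alf m c1 u - b1 c1) / (p - b1 c1)
  else if Rlt_dec u PI then 1 + (alf m c1 u - p) / (b4 c1 - p)
  else if Rlt_dec u (3*PI/2) then 2 + (b4 c1 - alf m c1 u) / (b4 c1 - p)
  else 3 + (p - alf m c1 u) / (p - b1 c1).

Definition phi m c1 t := 4 * IZR (kf t) + psi m c1 (uf t).

Lemma div_range (b x : R) : 0 < b -> 0 <= x < b -> 0 <= x / b < 1.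
Proof.
  intros Hb Hx. split. apply Rmult_le_pos; [lra| left; apply Rinv_0_lt_compat; lra].
  apply (Rmult_lt_reg_r b); try lra. unfold Rdiv. rewrite Rmult_assoc, Rinv_l; lra.
Qed.

Lemma psi_q0 m c1 u : (1 <= m)%nat -> 0 < c1 -> 0 <= u < PI/2 ->
  psi m c1 u = (alf m c1 u - b1 c1) / (sqrt c1 - b1 c1) /\ 0 <= psi m c1 u < 1.
Proof.
  intros Hm Hc Hu. pose proof PI_RGT_0. pose proof (b1_lt c1 Hc).
  assert (E : psi m c1 u = (alf m c1 u - b1 c1) / (sqrt c1 - b1 c1)).
  { unfold psi. destruct (Rlt_dec u (PI/2)); [reflexivity|lra]. }
  split; auto. rewrite E. apply div_range; [lra|].
  pose proof (alf_0 m c1 Hm). pose proof (alf_PI2 m c1 Hm Hc).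
  destruct (Req_dec u 0). subst u. lra.
  assert (alf m c1 0 < alf m c1 u) by (apply alf_incr; auto; lra).
  assert (alf m c1 u < alf m c1 (PI/2)) by (apply alf_incr; auto; lra). lra.
Qed.

Lemma psi_q1 m c1 u : (1 <= m)%nat -> 0 < c1 -> PI/2 <= u < PI ->
  psi m c1 u = 1 + (alf m c1 u - sqrt c1) / (b4 c1 - sqrt c1) /\ 1 <= psi m c1 u < 2.
Proof.
  intros Hm Hc Hu. pose proof PI_RGT_0. pose proof (b4_gt c1 Hc).
  assert (E : psi m c1 u = 1 + (alf m c1 u - sqrt c1) / (b4 c1 - sqrt c1)).
  { unfold psi. destruct (Rlt_dec u (PI/2)); [lra|]. destruct (Rlt_dec u PI); [reflexivity|lra]. }
  split; auto. rewrite E. cut (0 <= (alf m c1 u - sqrt c1) / (b4 c1 - sqrt c1) < 1). lra.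
  apply div_range; [lra|].
  pose proof (alf_PI m c1 Hm). pose proof (alf_PI2 m c1 Hm Hc).
  destruct (Req_dec u (PI/2)). subst u. lra.
  assert (alf m c1 (PI/2) < alf m c1 u) by (apply alf_incr; auto; lra).
  assert (alf m c1 u < alf m c1 PI) by (apply alf_incr; auto; lra). lra.
Qed.

Lemma psi_q2 m c1 u : (1 <= m)%nat -> 0 < c1 -> PI <= u < 3*PI/2 ->
  psi m c1 u = 2 + (b4 c1 - alf m c1 u) / (b4 c1 - sqrt c1) /\ 2 <= psi m c1 u < 3.
Proof.
  intros Hm Hc Hu. pose proof PI_RGT_0. pose proof (b4_gt c1 Hc).
  assert (E : psi m c1 u = 2 + (b4 c1 - alf m c1 u) / (b4 c1 - sqrt c1)).
  { unfold psi. destruct (Rlt_dec u (PI/2)); [lra|]. destruct (Rlt_dec u PI); [lra|].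
    destruct (Rlt_dec u (3*PI/2)); [reflexivity|lra]. }
  split; auto. rewrite E. cut (0 <= (b4 c1 - alf m c1 u) / (b4 c1 - sqrt c1) < 1). lra.
  apply div_range; [lra|].
  pose proof (alf_PI m c1 Hm). pose proof (alf_3PI2 m c1 Hm Hc).
  destruct (Req_dec u PI). subst u. lra.
  assert (alf m c1 u < alf m c1 PI) by (apply alf_decr; auto; lra).
  assert (alf m c1 (3*PI/2) < alf m c1 u) by (apply alf_decr; auto; lra). lra.
Qed.

Lemma psi_q3 m c1 u : (1 <= m)%nat -> 0 < c1 -> 3*PI/2 <= u < 2*PI ->
  psi m c1 u = 3 + (sqrt c1 - alf m c1 u) / (sqrt c1 - b1 c1) /\ 3 <= psi m c1 u < 4.
Proof.
  intros Hm Hc Hu. pose proof PI_RGT_0. pose proof (b1_lt c1 Hc).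
  assert (E : psi m c1 u = 3 + (sqrt c1 - alf m c1 u) / (sqrt c1 - b1 c1)).
  { unfold psi. destruct (Rlt_dec u (PI/2)); [lra|]. destruct (Rlt_dec u PI); [lra|].
    destruct (Rlt_dec u (3*PI/2)); [lra|reflexivity]. }
  split; auto. rewrite E. cut (0 <= (sqrt c1 - alf m c1 u) / (sqrt c1 - b1 c1) < 1). lra.
  apply div_range; [lra|].
  pose proof (alf_2PI m c1 Hm). pose proof (alf_3PI2 m c1 Hm Hc).
  destruct (Req_dec u (3*PI/2)) as [E'|E']. rewrite E'. lra.
  assert (alf m c1 u < alf m c1 (3*PI/2)) by (apply alf_decr; auto; lra).
  assert (alf m c1 (2*PI) < alf m c1 u) by (apply alf_decr; auto; lra). lra.
Qed.


Lemma Dp_eq m c1 : (1 <= m)%nat -> 0 < c1 -> Dp m c1 = 2 * dval1 m c1 - 2 * dval3 m c1.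
Proof.
  intros Hm Hc. rewrite dval1_eq, dval3_eq; auto. unfold Dp.
  pose proof (bef_sym m c1 0 Hm Hc). rewrite Rminus_0_r in H. lra.
Qed.

Lemma psi_range m c1 u : (1 <= m)%nat -> 0 < c1 -> 0 <= u < 2*PI -> 0 <= psi m c1 u < 4.
Proof.
  intros Hm Hc Hu.
  destruct (Rlt_dec u (PI/2)). destruct (psi_q0 m c1 u Hm Hc); lra.
  destruct (Rlt_dec u PI). destruct (psi_q1 m c1 u Hm Hc); lra.
  destruct (Rlt_dec u (3*PI/2)). destruct (psi_q2 m c1 u Hm Hc); lra.
  destruct (psi_q3 m c1 u Hm Hc); lra.
Qed.

Lemma kf_phi m c1 t : (1 <= m)%nat -> 0 < c1 -> Int_part (phi m c1 t / 4) = kf t.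
Proof.
  intros Hm Hc. apply Int_part_unique. unfold phi.
  pose proof (psi_range m c1 (uf t) Hm Hc (uf_range t)). lra.
Qed.

Lemma Gamma_match m c1 t : (1 <= m)%nat -> 0 < c1 ->
  (alf m c1 t, bef m c1 t) = Gamma_ref m c1 (phi m c1 t).
Proof.
  intros Hm Hc. pose proof PI_RGT_0 as HPI.
  pose proof (b1_lt c1 Hc) as Hb1. pose proof (b4_gt c1 Hc) as Hb4.
  unfold Gamma_ref. cbv zeta. unfold floorR. rewrite kf_phi; auto.
  replace (phi m c1 t - 4 * IZR (kf t)) with (psi m c1 (uf t)) by (unfold phi; ring).
  rewrite <- Dp_eq; auto.
  set (u := uf t). set (k := kf t). pose proof (uf_range t) as Hu. fold u in Hu.
  rewrite (t_decomp t). fold u k.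
  destruct (Z_shift m c1 u k Hm Hc) as [Ea Eb]. rewrite Ea, Eb.
  destruct (Rlt_dec u (PI/2)).
  - destruct (psi_q0 m c1 u Hm Hc) as [E R]; [lra|]. rewrite E in *.
    destruct (Rlt_dec _ 1); [|lra].
    replace (b1 c1 + (alf m c1 u - b1 c1) / (sqrt c1 - b1 c1) * (sqrt c1 - b1 c1)) with (alf m c1 u)
      by (field; lra).
    rewrite F1_all; auto; [|lra]. f_equal. ring.
  - destruct (Rlt_dec u PI).
    + destruct (psi_q1 m c1 u Hm Hc) as [E R]; [lra|]. rewrite E in *.
      destruct (Rlt_dec _ 1); [lra|]. destruct (Rlt_dec _ 2); [|lra].
      replace (sqrt c1 + (1 + (alf m c1 u - sqrt c1) / (b4 c1 - sqrt c1) - 1) * (b4 c1 - sqrt c1))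
        with (alf m c1 u) by (field; lra).
      rewrite F2_all; auto; [|lra]. f_equal. ring.
    + destruct (Rlt_dec u (3*PI/2)).
      * destruct (psi_q2 m c1 u Hm Hc) as [E R]; [lra|]. rewrite E in *.
        destruct (Rlt_dec _ 1); [lra|]. destruct (Rlt_dec _ 2); [lra|]. destruct (Rlt_dec _ 3); [|lra].
        replace (b4 c1 - (2 + (b4 c1 - alf m c1 u) / (b4 c1 - sqrt c1) - 2) * (b4 c1 - sqrt c1))
          with (alf m c1 u) by (field; lra).
        rewrite <- (alf_sym m c1 u). rewrite F2_all; auto; [|lra].
        rewrite bef_sym, dval3_eq; auto. f_equal. ring.
      * destruct (psi_q3 m c1 u Hm Hc) as [E R]; [lra|]. rewrite E in *.
        destruct (Rlt_dec _ 1); [lra|]. destruct (Rlt_dec _ 2); [lra|]. destruct (Rlt_dec _ 3); [lra|].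
        replace (sqrt c1 - (3 + (sqrt c1 - alf m c1 u) / (sqrt c1 - b1 c1) - 3) * (sqrt c1 - b1 c1))
          with (alf m c1 u) by (field; lra).
        rewrite <- (alf_sym m c1 u). rewrite F1_all; auto; [|lra].
        rewrite bef_sym, dval3_eq; auto. f_equal. ring.
Qed.


Lemma div_lt a b c : 0 < c -> a < b -> a / c < b / c.
Proof. intros. unfold Rdiv. apply Rmult_lt_compat_r; auto. apply Rinv_0_lt_compat; auto. Qed.

Lemma psi_incr m c1 u1 u2 : (1 <= m)%nat -> 0 < c1 -> 0 <= u1 -> u1 < u2 -> u2 < 2*PI ->
  psi m c1 u1 < psi m c1 u2.
Proof.
  intros Hm Hc H1 H2 H3. pose proof PI_RGT_0. pose proof (b1_lt c1 Hc). pose proof (b4_gt c1 Hc).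
  destruct (Rlt_dec u2 (PI/2)).
  { destruct (psi_q0 m c1 u1 Hm Hc) as [E1 R1]; [lra|]. destruct (psi_q0 m c1 u2 Hm Hc) as [E2 R2]; [lra|].
    rewrite E1, E2. apply div_lt; [lra|]. assert (alf m c1 u1 < alf m c1 u2) by (apply alf_incr; auto; lra). lra. }
  destruct (Rlt_dec u2 PI).
  { destruct (psi_q1 m c1 u2 Hm Hc) as [E2 R2]; [lra|].
    destruct (Rlt_dec u1 (PI/2)). destruct (psi_q0 m c1 u1 Hm Hc); lra.
    destruct (psi_q1 m c1 u1 Hm Hc) as [E1 R1]; [lra|].
    rewrite E1, E2. cut ((alf m c1 u1 - sqrt c1) / (b4 c1 - sqrt c1) < (alf m c1 u2 - sqrt c1) / (b4 c1 - sqrt c1)). lra.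
    apply div_lt; [lra|]. assert (alf m c1 u1 < alf m c1 u2) by (apply alf_incr; auto; lra). lra. }
  destruct (Rlt_dec u2 (3*PI/2)).
  { destruct (psi_q2 m c1 u2 Hm Hc) as [E2 R2]; [lra|].
    destruct (Rlt_dec u1 (PI/2)). destruct (psi_q0 m c1 u1 Hm Hc); lra.
    destruct (Rlt_dec u1 PI). destruct (psi_q1 m c1 u1 Hm Hc); lra.
    destruct (psi_q2 m c1 u1 Hm Hc) as [E1 R1]; [lra|].
    rewrite E1, E2. cut ((b4 c1 - alf m c1 u1) / (b4 c1 - sqrt c1) < (b4 c1 - alf m c1 u2) / (b4 c1 - sqrt c1)). lra.
    apply div_lt; [lra|]. assert (alf m c1 u2 < alf m c1 u1) by (apply alf_decr; auto; lra). lra. }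
  destruct (psi_q3 m c1 u2 Hm Hc) as [E2 R2]; [lra|].
  destruct (Rlt_dec u1 (PI/2)). destruct (psi_q0 m c1 u1 Hm Hc); lra.
  destruct (Rlt_dec u1 PI). destruct (psi_q1 m c1 u1 Hm Hc); lra.
  destruct (Rlt_dec u1 (3*PI/2)). destruct (psi_q2 m c1 u1 Hm Hc); lra.
  destruct (psi_q3 m c1 u1 Hm Hc) as [E1 R1]; [lra|].
  rewrite E1, E2. cut ((sqrt c1 - alf m c1 u1) / (sqrt c1 - b1 c1) < (sqrt c1 - alf m c1 u2) / (sqrt c1 - b1 c1)). lra.
  apply div_lt; [lra|]. assert (alf m c1 u2 < alf m c1 u1) by (apply alf_decr; auto; lra). lra.
Qed.

Lemma phi_incr m c1 t1 t2 : (1 <= m)%nat -> 0 < c1 -> t1 < t2 -> phi m c1 t1 < phi m c1 t2.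
Proof.
  intros Hm Hc Ht. pose proof PI_RGT_0.
  pose proof (uf_range t1) as U1. pose proof (uf_range t2) as U2.
  pose proof (t_decomp t1) as D1. pose proof (t_decomp t2) as D2.
  pose proof (psi_range m c1 _ Hm Hc U1). pose proof (psi_range m c1 _ Hm Hc U2).
  unfold phi. set (k1 := kf t1) in *. set (k2 := kf t2) in *.
  assert (Hk : (k1 <= k2)%Z).
  { assert (IZR k1 < IZR k2 + 1) by nra. rewrite <- plus_IZR in H2. apply lt_IZR in H2. lia. }
  destruct (Z.eq_dec k1 k2) as [E|E].
  - rewrite <- E in *. assert (uf t1 < uf t2) by lra.
    pose proof (psi_incr m c1 (uf t1) (uf t2) Hm Hc). lra.
  - assert (IZR k1 + 1 <= IZR k2) by (rewrite <- plus_IZR; apply IZR_le; lia). lra.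
Qed.

Lemma find_u m c1 r : (1 <= m)%nat -> 0 < c1 -> 0 <= r < 4 ->
  exists u, 0 <= u < 2*PI /\ psi m c1 u = r.
Proof.
  intros Hm Hc Hr. pose proof PI_RGT_0. pose proof (b1_lt c1 Hc). pose proof (b4_gt c1 Hc).
  pose proof (alf_continuity m c1 Hm Hc) as Cont.
  pose proof (alf_0 m c1 Hm). pose proof (alf_PI2 m c1 Hm Hc). pose proof (alf_PI m c1 Hm).
  pose proof (alf_3PI2 m c1 Hm Hc). pose proof (alf_2PI m c1 Hm).
  destruct (Rlt_dec r 1).
  { set (y := b1 c1 + r * (sqrt c1 - b1 c1)).
    destruct (IVT_gen (alf m c1) 0 (PI/2) y Cont) as [u [Hu Ey]].
    { rewrite H2, H3, Rmin_left, Rmax_right; unfold y; nra. }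
    rewrite Rmin_left, Rmax_right in Hu by lra.
    assert (u <> PI/2). { intros E. subst u. unfold y in Ey. nra. }
    exists u. split. lra. destruct (psi_q0 m c1 u Hm Hc) as [E _]; [lra|]. rewrite E, Ey. unfold y. field. lra. }
  destruct (Rlt_dec r 2).
  { set (y := sqrt c1 + (r - 1) * (b4 c1 - sqrt c1)).
    destruct (IVT_gen (alf m c1) (PI/2) PI y Cont) as [u [Hu Ey]].
    { rewrite H3, H4, Rmin_left, Rmax_right; unfold y; nra. }
    rewrite Rmin_left, Rmax_right in Hu by lra.
    assert (u <> PI). { intros E. subst u. unfold y in Ey. nra. }
    exists u. split. lra. destruct (psi_q1 m c1 u Hm Hc) as [E _]; [lra|]. rewrite E, Ey. unfold y. field. lra. }
  destruct (Rlt_dec r 3).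
  { set (y := b4 c1 - (r - 2) * (b4 c1 - sqrt c1)).
    destruct (IVT_gen (alf m c1) PI (3*PI/2) y Cont) as [u [Hu Ey]].
    { rewrite H4, H5, Rmin_right, Rmax_left; unfold y; nra. }
    rewrite Rmin_left, Rmax_right in Hu by lra.
    assert (u <> 3*PI/2). { intros E. rewrite E in Ey. unfold y in Ey. nra. }
    exists u. split. lra. destruct (psi_q2 m c1 u Hm Hc) as [E _]; [lra|]. rewrite E, Ey. unfold y. field. lra. }
  { set (y := sqrt c1 - (r - 3) * (sqrt c1 - b1 c1)).
    destruct (IVT_gen (alf m c1) (3*PI/2) (2*PI) y Cont) as [u [Hu Ey]].
    { rewrite H5, H6, Rmin_right, Rmax_left; unfold y; nra. }
    rewrite Rmin_left, Rmax_right in Hu by lra.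
    assert (u <> 2*PI). { intros E. rewrite E in Ey. unfold y in Ey. nra. }
    exists u. split. lra. destruct (psi_q3 m c1 u Hm Hc) as [E _]; [lra|]. rewrite E, Ey. unfold y. field. lra. }
Qed.

Lemma phi_surj m c1 s : (1 <= m)%nat -> 0 < c1 -> exists t, phi m c1 t = s.
Proof.
  intros Hm Hc. pose proof PI_RGT_0.
  set (k := Int_part (s / 4)). destruct (base_Int_part (s / 4)) as [B1 B2]. fold k in B1, B2.
  destruct (find_u m c1 (s - 4 * IZR k) Hm Hc) as [u [Hu Eu]]. lra.
  exists (u + 2*PI*IZR k). unfold phi. rewrite kf_unique by auto.
  unfold uf. rewrite kf_unique by auto. replace (u + 2 * PI * IZR k - 2 * PI * IZR k) with u by ring.
  rewrite Eu. ring.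
Qed.

Lemma mono_surj_cont (f : R -> R) : (forall a b, a < b -> f a < f b) -> (forall s, exists t, f t = s) ->
  forall x, continuous f x.
Proof.
  intros Hi Hs x. apply continuity_pt_filterlim.
  intros eps He.
  destruct (Hs (f x - eps)) as [t1 E1]. destruct (Hs (f x + eps)) as [t2 E2].
  assert (T1 : t1 < x).
  { destruct (Rlt_or_le t1 x); auto. destruct (Req_dec t1 x). subst; lra.
    assert (f x < f t1) by (apply Hi; lra). lra. }
  assert (T2 : x < t2).
  { destruct (Rlt_or_le x t2); auto. destruct (Req_dec t2 x). subst; lra.
    assert (f t2 < f x) by (apply Hi; lra). lra. }
  exists (Rmin (x - t1) (t2 - x)). split.
  apply Rmin_glb_lt; lra.
  intros y [_ Hy]. simpl in Hy. unfold R_dist in *. simpl. unfold R_dist.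
  pose proof (Rmin_l (x - t1) (t2 - x)). pose proof (Rmin_r (x - t1) (t2 - x)).
  apply Rabs_def2 in Hy. destruct Hy.
  assert (f t1 < f y) by (apply Hi; lra). assert (f y < f t2) by (apply Hi; lra).
  apply Rabs_def1; lra.
Qed.


Lemma cont2 (f g : R -> R) (p : R * R) : continuous f (fst p) -> continuous g (snd p) ->
  continuous (fun q : R * R => f (fst q) * g (snd q)) p.
Proof.
  destruct p as [x y]. simpl. intros Hf Hg.
  apply (continuous_mult (fun q : R * R => f (fst q)) (fun q : R * R => g (snd q))).
  apply (continuous_comp fst f). apply continuous_fst. exact Hf.
  apply (continuous_comp snd g). apply continuous_snd. exact Hg.
Qed.

Lemma C2e_cont f x : C2e f -> continuous f x.
Proof. intros [f1 [f2 H]]. eapply is_derive_cont. apply H. Qed.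

Definition Rd m t := sin t ^ (2*m-1) / (Qf m t * Nf m t).
Definition Wd m t := cos t ^ (2*m-1) / (Qf m t * Nf m t).

Lemma C2e_Rd m : (1 <= m)%nat -> C2e (Rd m).
Proof.
  intros Hm. unfold Rd, Rdiv. apply C2e_mult. apply C2e_pow, C2e_sin, C2e_id.
  apply C2e_inv. apply C2e_mult. apply C2e_Qf. apply C2e_Nf; auto.
  intros. apply Rmult_lt_0_compat. apply Qf_pos; auto. apply Nf_pos.
Qed.
Lemma C2e_Wd m : (1 <= m)%nat -> C2e (Wd m).
Proof.
  intros Hm. unfold Wd, Rdiv. apply C2e_mult. apply C2e_pow, C2e_cos, C2e_id.
  apply C2e_inv. apply C2e_mult. apply C2e_Qf. apply C2e_Nf; auto.
  intros. apply Rmult_lt_0_compat. apply Qf_pos; auto. apply Nf_pos.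
Qed.

Lemma Der_l (f g : R -> R) t v df : is_derive f t df -> Derive (fun s => f s * g v) t = df * g v.
Proof.
  intros H. apply is_derive_unique. apply (isd_val _ _ (df * g v + f t * 0)).
  apply (isd_mult f (fun _ => g v)); auto. apply isd_const. rewrite Rmult_0_r, Rplus_0_r; reflexivity.
Qed.

Lemma Der_r (f g : R -> R) t v dg : is_derive g v dg -> Derive (fun s => f t * g s) v = f t * dg.
Proof.
  intros H. apply is_derive_unique. apply (isd_val _ _ (0 * g v + f t * dg)).
  apply (isd_mult (fun _ => f t) g); auto. apply isd_const. rewrite Rmult_0_l, Rplus_0_l; reflexivity.
Qed.

Lemma cos_der v : is_derive cos v (- sin v).
Proof. auto_derive; auto; ring. Qed.
Lemma sin_der v : is_derive sin v (cos v).
Proof. auto_derive; auto; ring. Qed.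

Lemma C1_e (f df g dg : R -> R) : (forall t, is_derive f t (df t)) -> (forall x, continuous df x) ->
  (forall v, is_derive g v (dg v)) -> (forall x, continuous dg x) ->
  C1_fun2 (fun t v => f t * g v).
Proof.
  intros Hf Hdf Hg Hdg. split.
  - intros t v. split. exists (df t * g v). apply (isd_val _ _ (df t * g v + f t * 0)).
    apply (isd_mult f (fun _ => g v)); auto. apply isd_const. rewrite Rmult_0_r, Rplus_0_r; reflexivity.
    exists (f t * dg v). apply (isd_val _ _ (0 * g v + f t * dg v)).
    apply (isd_mult (fun _ => f t) g); auto. apply isd_const. rewrite Rmult_0_l, Rplus_0_l; reflexivity.
  - intros p. split; [|split].
    + apply cont2. eapply is_derive_cont; eauto. eapply is_derive_cont; eauto.
    + apply (continuous_ext (fun q : R * R => df (fst q) * g (snd q))).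
      intros q. unfold pd_t. symmetry. apply Der_l; auto.
      apply cont2; auto. eapply is_derive_cont; eauto.
    + apply (continuous_ext (fun q : R * R => f (fst q) * dg (snd q))).
      intros q. unfold pd_v. symmetry. apply Der_r; auto.
      apply cont2; auto. eapply is_derive_cont; eauto.
Qed.

Lemma cont_sin x : continuous sin x.
Proof. eapply is_derive_cont; apply sin_der. Qed.
Lemma cont_cos x : continuous cos x.
Proof. eapply is_derive_cont; apply cos_der. Qed.
Lemma cont_msin x : continuous (fun y => - sin y) x.
Proof. apply cont_opp, cont_sin. Qed.

Lemma gradPhi1_eq m x1 x2 x3 : (1 <= m)%nat ->
  gradPhi1 m x1 x2 x3 = INR m * (x1 ^ 2 + x2 ^ 2) ^ (m - 1) * (2 * x1).
Proof.
  intros Hm. unfold gradPhi1, Phi. apply is_derive_unique. auto_derive; auto.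
  replace (Init.Nat.pred m) with (m - 1)%nat by lia.
  replace (x1 * (x1 * 1) + x2 * (x2 * 1)) with (x1 ^ 2 + x2 ^ 2) by ring.
  set (P := (x1 ^ 2 + x2 ^ 2) ^ (m - 1)). ring.
Qed.
Lemma gradPhi2_eq m x1 x2 x3 : (1 <= m)%nat ->
  gradPhi2 m x1 x2 x3 = INR m * (x1 ^ 2 + x2 ^ 2) ^ (m - 1) * (2 * x2).
Proof.
  intros Hm. unfold gradPhi2, Phi. apply is_derive_unique. auto_derive; auto.
  replace (Init.Nat.pred m) with (m - 1)%nat by lia.
  replace (x1 * (x1 * 1) + x2 * (x2 * 1)) with (x1 ^ 2 + x2 ^ 2) by ring.
  set (P := (x1 ^ 2 + x2 ^ 2) ^ (m - 1)). ring.
Qed.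
Lemma gradPhi3_eq m x1 x2 x3 : (1 <= m)%nat ->
  gradPhi3 m x1 x2 x3 = INR (2*m) * x3 ^ (2*m - 1).
Proof.
  intros Hm. unfold gradPhi3, Phi. apply is_derive_unique. auto_derive; auto.
  change (m + (m + 0))%nat with (2*m)%nat.
  replace (Init.Nat.pred (2*m)) with (2*m-1)%nat by lia. rewrite Rmult_1_l; reflexivity.
Qed.


Lemma trig_id a b v : a * cos v * (b * cos v) - a * sin v * (b * - sin v) = a * b.
Proof. pose proof (sin2_cos2 v) as H. unfold Rsqr in H.
  replace (a * cos v * (b * cos v) - a * sin v * (b * - sin v)) with (a * b * (sin v * sin v + cos v * cos v)) by ring.
  rewrite H; ring. Qed.

Lemma trig_sq x v : (x * cos v) ^ 2 + (x * sin v) ^ 2 = x ^ 2.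
Proof. pose proof (sin2_cos2 v) as H. unfold Rsqr in H.
  replace ((x * cos v) ^ 2 + (x * sin v) ^ 2) with (x ^ 2 * (sin v * sin v + cos v * cos v)) by ring.
  rewrite H; ring. Qed.

Lemma pow_odd_split x m : (1 <= m)%nat -> x ^ (2*m-1) = x * (x ^ 2) ^ (m - 1).
Proof.
  intros. replace (2*m-1)%nat with (S (2*(m-1))) by lia. rewrite <- tech_pow_Rmult, pow_mult. reflexivity.
Qed.

Lemma pd_facts m c1 t v : (1 <= m)%nat -> 0 < c1 ->
  pd_t (fs1 (alf m c1)) t v = ald m c1 t * cos v /\
  pd_t (fs2 (alf m c1)) t v = ald m c1 t * sin v /\
  pd_t (fs3 (bef m c1)) t v = bpf m c1 t /\
  pd_v (fs1 (alf m c1)) t v = alf m c1 t * - sin v /\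
  pd_v (fs2 (alf m c1)) t v = alf m c1 t * cos v /\
  pd_v (fs3 (bef m c1)) t v = 0.
Proof.
  intros Hm Hc. unfold pd_t, pd_v, fs1, fs2, fs3.
  repeat split.
  - apply (Der_l (alf m c1) cos). apply alf_der; auto.
  - apply (Der_l (alf m c1) sin). apply alf_der; auto.
  - apply is_derive_unique. apply bef_deriv; auto.
  - apply (Der_r (alf m c1) cos). apply cos_der.
  - apply (Der_r (alf m c1) sin). apply sin_der.
  - apply is_derive_unique. apply isd_const.
Qed.

Definition e1f m (t v : R) := Rf m t * cos v.
Definition e2f m (t v : R) := Rf m t * sin v.
Definition e3f m (t v : R) := Wf m t * 1.

Lemma pe_facts m t v : (1 <= m)%nat ->
  pd_t (e1f m) t v = Rd m t * cos v /\ pd_t (e2f m) t v = Rd m t * sin v /\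
  pd_t (e3f m) t v = Wd m t * 1 /\
  pd_v (e1f m) t v = Rf m t * - sin v /\ pd_v (e2f m) t v = Rf m t * cos v /\
  pd_v (e3f m) t v = Wf m t * 0.
Proof.
  intros Hm. unfold pd_t, pd_v, e1f, e2f, e3f. repeat split.
  - apply (Der_l (Rf m) cos t v (Rd m t)). exact (Rf_deriv m t Hm).
  - apply (Der_l (Rf m) sin t v (Rd m t)). exact (Rf_deriv m t Hm).
  - apply (Der_l (Wf m) (fun _ => 1) t v (Wd m t)). exact (Wf_deriv m t Hm).
  - apply (Der_r (Rf m) cos). apply cos_der.
  - apply (Der_r (Rf m) sin). apply sin_der.
  - apply (Der_r (Wf m) (fun _ => 1)). apply isd_const.
Qed.

Lemma BG_ok m c1 t v : (1 <= m)%nat -> 0 < c1 ->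
  is_BG_map_at m (fs1 (alf m c1)) (fs2 (alf m c1)) (fs3 (bef m c1)) (e1f m) (e2f m) (e3f m) t v.
Proof.
  intros Hm Hc. unfold is_BG_map_at. cbv zeta.
  destruct (pd_facts m c1 t v Hm Hc) as [P1 [P2 [P3 [P4 [P5 P6]]]]].
  rewrite P1, P2, P3, P4, P5, P6.
  unfold e1f, e2f, e3f. rewrite gradPhi1_eq, gradPhi2_eq, gradPhi3_eq, trig_sq, trig_id by auto.
  rewrite Rmult_1_r.
  pose proof (Nf_pos m t) as HN. pose proof (Qf_pos m t Hm) as HQ.
  pose proof (Sf_pos m c1 t Hc) as HS. pose proof (alf_pos m c1 t Hc) as Ha.
  split.
  - unfold Phi. rewrite trig_sq, <- pow_mult. apply RW_pow; auto.
  - assert (HB : 0 < (Nf m t ^ 2) ^ (m - 1)) by (apply pow_lt; nra).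
    exists (2 * INR m * Qf m t * Sf m c1 t / ((Nf m t ^ 2) ^ (m - 1) * alf m c1 t ^ 2)).
    assert (HmR : 0 < INR m) by (apply lt_0_INR; lia).
    assert (ERf : Rf m t ^ 2 = cos t ^ 2 / Nf m t ^ 2) by (unfold Rf; field; apply neq0; auto).
    rewrite ERf, pow_div by (apply neq0; nra).
    unfold ald, bpf, Wf. rewrite (pow_div (sin t)) by (apply neq0; auto).
    rewrite !(pow_odd_split _ m Hm). rewrite mult_INR.
    unfold Rf.
    set (A := (cos t ^ 2) ^ (m - 1)) in *. set (As := (sin t ^ 2) ^ (m - 1)) in *.
    set (B := (Nf m t ^ 2) ^ (m - 1)) in *. clearbody A As B.
    set (al := alf m c1 t) in *. clearbody al.
    split; [|split; [|split]].
    + apply Rdiv_lt_0_compat; [repeat apply Rmult_lt_0_compat; lra | apply Rmult_lt_0_compat; [lra| apply pow_lt; lra]].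
    + field. repeat split; apply neq0; auto; nra.
    + field. repeat split; apply neq0; auto; nra.
    + simpl INR. field. repeat split; apply neq0; auto; nra.
Qed.

Lemma MC_ok m c1 t v : (1 <= m)%nat -> 0 < c1 ->
  mink_mean_curv_is (fs1 (alf m c1)) (fs2 (alf m c1)) (fs3 (bef m c1)) (e1f m) (e2f m) (e3f m) t v 1.
Proof.
  intros Hm Hc.
  destruct (pd_facts m c1 t v Hm Hc) as [P1 [P2 [P3 [P4 [P5 P6]]]]].
  destruct (pe_facts m t v Hm) as [Q1 [Q2 [Q3 [Q4 [Q5 Q6]]]]].
  pose proof (Nf_pos m t) as HN. pose proof (Qf_pos m t Hm) as HQ.
  pose proof (Sf_pos m c1 t Hc) as HS. pose proof (alf_pos m c1 t Hc) as Ha.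
  exists (Sf m c1 t / alf m c1 t), 0, 0, (Rf m t / alf m c1 t).
  rewrite P1, P2, P3, P4, P5, P6, Q1, Q2, Q3, Q4, Q5, Q6.
  unfold ald, Rd, Wd, bpf.
  assert (E : alf m c1 t = (Rf m t + Sf m c1 t) / 2) by reflexivity.
  set (s := sin t ^ (2*m-1)). set (c := cos t ^ (2*m-1)).
  set (al := alf m c1 t) in *. clearbody al s c.
  repeat split; try (field; repeat split; apply neq0; auto; nra).
  rewrite E in *. field. apply neq0. lra.
Qed.


Lemma regular m c1 t : (1 <= m)%nat -> 0 < c1 ->
  Derive (alf m c1) t <> 0 \/ Derive (bef m c1) t <> 0.
Proof.
  intros Hm Hc. rewrite (is_derive_unique _ _ _ (alf_der m c1 t Hm Hc)).
  rewrite (is_derive_unique _ _ _ (bef_deriv m c1 t Hm Hc)).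
  destruct (Req_dec (sin t) 0) as [E|E].
  - right. assert (cos t <> 0).
    { intros E2. pose proof (sin2_cos2 t). unfold Rsqr in H. rewrite E, E2 in H. lra. }
    destruct (Rlt_or_le (cos t) 0).
    + pose proof (bpf_neg m c1 t Hm Hc H0). lra.
    + assert (0 < cos t) by lra. pose proof (bpf_pos m c1 t Hm Hc H1). lra.
  - left. destruct (Rlt_or_le (sin t) 0).
    + pose proof (ald_neg m c1 t Hm Hc H). lra.
    + assert (0 < sin t) by lra. pose proof (ald_pos m c1 t Hm Hc H0). lra.
Qed.

Theorem theorem6p3 (m : nat) (hm : (2 <= m)%nat) (c1 : R) (hc1 : 0 < c1) :
  (* the improper integrals are finite, and d1, d3 > 0 *)
  ex_RInt_gen (integrand1 m c1) (at_right (b1 c1)) (at_point (sqrt c1)) /\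
  ex_RInt_gen (integrand2 m c1) (at_point (sqrt c1)) (at_left (b4 c1)) /\
  0 < dval1 m c1 /\ 0 < dval3 m c1 /\
  (* Gamma^* admits a regular C^2 parametrization traversing it in order ... *)
  exists (als bes phi : R -> R),
    (forall t1 t2, t1 < t2 -> phi t1 < phi t2) /\
    (forall t, continuous phi t) /\
    (forall s, exists t, phi t = s) /\
    (forall t, (als t, bes t) = Gamma_ref m c1 (phi t)) /\
    C2_fun als /\ C2_fun bes /\
    (forall t, Derive als t <> 0 \/ Derive bes t <> 0) /\
    (* ... whose rotational surface has a C^1 Birkhoff-Gauss map with H = 1 *)
    exists e1 e2 e3 : R -> R -> R,
      C1_fun2 e1 /\ C1_fun2 e2 /\ C1_fun2 e3 /\
      forall t v, 0 <= v <= 2 * PI ->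
        is_BG_map_at m (fs1 als) (fs2 als) (fs3 bes) e1 e2 e3 t v /\
        mink_mean_curv_is (fs1 als) (fs2 als) (fs3 bes) e1 e2 e3 t v 1.
Proof.
  assert (Hm : (1 <= m)%nat) by lia.
  split. exists (- bef m c1 0). apply isRIg1; auto.
  split. exists (- bef m c1 PI). apply isRIg2; auto.
  split. rewrite dval1_eq; auto. pose proof (bef_0_neg m c1 Hm hc1). lra.
  split. rewrite dval3_eq; auto. pose proof (bef_PI_neg m c1 Hm hc1). lra.
  exists (alf m c1), (bef m c1), (phi m c1).
  split. intros; apply phi_incr; auto.
  split. apply mono_surj_cont. intros; apply phi_incr; auto. intros; apply phi_surj; auto.
  split. intros; apply phi_surj; auto.
  split. intros; apply Gamma_match; auto.
  split. apply C2e_C2_fun, C2e_alf; auto.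
  split. apply C2e_C2_fun, C2e_bef; auto.
  split. intros; apply regular; auto.
  exists (e1f m), (e2f m), (e3f m).
  split. unfold e1f. apply (C1_e (Rf m) (Rd m) cos (fun v => - sin v)).
    intros; apply Rf_deriv; auto. intros; apply C2e_cont, C2e_Rd; auto.
    apply cos_der. apply cont_msin.
  split. unfold e2f. apply (C1_e (Rf m) (Rd m) sin cos).
    intros; apply Rf_deriv; auto. intros; apply C2e_cont, C2e_Rd; auto.
    apply sin_der. apply cont_cos.
  split. unfold e3f. apply (C1_e (Wf m) (Wd m) (fun _ => 1) (fun _ => 0)).
    intros; apply Wf_deriv; auto. intros; apply C2e_cont, C2e_Wd; auto.
    intros; apply isd_const. intros; apply cont_const.
  intros t v _. split. apply BG_ok; auto. apply MC_ok; auto.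
Qed.
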